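(* Let $c\ge 1$ be an integer and $\lambda_1,\lambda_2,\mu_1,\mu_2>0$. Let $X$ be the continuous-time Markov chain on $\mathbb{N}_0^2$ described in the context, started at $X(0)=(0,0)$, and let $\pi_x(\alpha)$, $x\in\mathbb{N}_0^2$, $\mathrm{Re}\,\alpha>0$, be the Laplace transforms of its transition functions. Fix $\alpha$ with $\mathrm{Re}\,\alpha>0$ and define numbers $\{v_{i,j}\}_{i\ge j\ge 0}$ recursively by $v_{0,0}=\pi_{(0,c-1)}(\alpha)$ and, for $i\ge 0$, $$v_{i+1,0}=\pi_{(i+1,c-1)}(\alpha),\qquad v_{i+1,j}=R_1\Bigl(v_{i,j-1}+R_2\sum_{k=j}^{i}v_{i,k}\Bigr),\quad 1\le j\le i+1.$$ Then for all $i\ge 0$ and $j\ge 1$, $$\pi_{(i,c-1+j)}(\alpha)=\sum_{k=0}^{i}v_{i,k}\,(1-R_2)^k\binom{j-1+k}{k}r_2^{\,j}.$$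
   Context: The Markov chain $X=\{(X_1(t),X_2(t))\}_{t\ge0}$ on $\mathbb{N}_0^2$ has as its only nonzero off-diagonal transition rates: $q((i,j),(i+1,j))=\lambda_1$ ($i,j\ge0$); $q((i,j),(i,j+1))=\lambda_2$ ($i,j\ge0$); $q((i,j),(i-1,j))=\max(\min(i,c-j),0)\mu_1$ ($i\ge1$, $j\ge0$); $q((i,j),(i,j-1))=\min(c,j)\mu_2$ ($i\ge0$, $j\ge1$). (It models an $M/M/c$ queue with two classes, class 2 having preemptive-resume priority over class 1; $X_n(t)$ is the number of class-$n$ customers.) For $x\in\mathbb{N}_0^2$, $p_x(t)=P(X(t)=x\mid X(0)=(0,0))$ and $\pi_x(\alpha)=\int_0^\infty e^{-\alpha t}p_x(t)\,dt$ for $\mathrm{Re}\,\alpha>0$. For $\lambda,\mu>0$, $\phi_{\lambda,\mu}(s)=E[e^{-sB}]=\frac{\lambda+\mu+s-\sqrt{(\lambda+\mu+s)^2-4\lambda\mu}}{2\lambda}$ is the Laplace–Stieltjes transform of the busy period $B$ of an $M/M/1$ queue with arrival rate $\lambda$ and service rate $\mu$ started by one customer. Set $\rho_2=\lambda_2/(c\mu_2)$, $\phi_2=\phi_{\lambda_2,c\mu_2}(\lambda_1+\alpha)$, $r_2=\rho_2\phi_2$, $\Omega_2=\frac{\rho_2\phi_2}{\lambda_2(1-\rho_2\phi_2^2)}$, $R_1=\frac{\lambda_1\Omega_2}{1-r_2\phi_2}$, $R_2=r_2\phi_2$. Empty sums are zero. *)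

(* Defs.v *)
From Stdlib Require Import Reals List Arith.
From Coquelicot Require Import Coquelicot.
Open Scope R_scope.

Definition Cexp (z : C) : C :=
  (exp (fst z) * cos (snd z), exp (fst z) * sin (snd z)).

(* principal square root (Re >= 0; cut along the negative real axis) *)
Definition Csqrt (z : C) : C :=
  let r := Cmod z in
  (sqrt ((r + fst z) / 2),
   if Rlt_dec (snd z) 0 then - sqrt ((r - fst z) / 2) else sqrt ((r - fst z) / 2)).

Definition Csum (f : nat -> C) (a b : nat) : C :=
  fold_right Cplus (RtoC 0) (map f (seq a (S b - a))).

Definition state := (nat * nat)%type.

Definition qrate (c : nat) (l1 l2 m1 m2 : R) (x y : state) : R :=
  let (i, j) := x in let (i', j') := y in
  (if (Nat.eqb i' (S i) && Nat.eqb j' j)%bool then l1 else 0) +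
  (if (Nat.eqb i' i && Nat.eqb j' (S j))%bool then l2 else 0) +
  (if (Nat.eqb (S i') i && Nat.eqb j' j)%bool
     then INR (Nat.min i (c - j)) * m1 else 0) +   (* = max(min(i,c-j),0) mu1 *)
  (if (Nat.eqb i' i && Nat.eqb (S j') j)%bool
     then INR (Nat.min c j) * m2 else 0).

(* all states y <> x with q(x,y) possibly nonzero (the relation is symmetric,
   so these are also all states x <> y with q(x,y) possibly nonzero) *)
Definition nbrs (x : state) : list state :=
  let (i, j) := x in
  (S i, j) :: (i, S j) ::
  (match i with O => nil | S i' => (i', j) :: nil end) ++
  (match j with O => nil | S j' => (i, j') :: nil end).

Definition Rsum_list (l : list R) : R := fold_right Rplus 0 l.

Definition qout c l1 l2 m1 m2 (x : state) : R :=
  Rsum_list (map (fun y => qrate c l1 l2 m1 m2 x y) (nbrs x)).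

(* uniformization constant: an upper bound for all outflow rates *)
Definition Lam (c : nat) (l1 l2 m1 m2 : R) : R := l1 + l2 + INR c * (m1 + m2).

(* distribution after n steps of the uniformized jump chain
   P = I + Q/Lam, started at (0,0):  dist (n+1) y = sum_x dist n x * P(x,y) *)
Fixpoint dist c l1 l2 m1 m2 (n : nat) (y : state) : R :=
  match n with
  | O => if (Nat.eqb (fst y) 0 && Nat.eqb (snd y) 0)%bool then 1 else 0
  | S n' =>
      dist c l1 l2 m1 m2 n' y * (1 - qout c l1 l2 m1 m2 y / Lam c l1 l2 m1 m2) +
      Rsum_list (map (fun x => dist c l1 l2 m1 m2 n' x *
                               (qrate c l1 l2 m1 m2 x y / Lam c l1 l2 m1 m2))
                     (nbrs y))
  end.

(* transition function p_x(t) = P(X(t) = x | X(0) = (0,0)) = (e^{tQ})_{(0,0),x},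
   computed by uniformization (the rates are bounded by Lam). *)
Definition ptrans c l1 l2 m1 m2 (x : state) (t : R) : R :=
  Series (fun n => exp (- (Lam c l1 l2 m1 m2 * t)) *
                   (Lam c l1 l2 m1 m2 * t) ^ n / INR (fact n) *
                   dist c l1 l2 m1 m2 n x).

Definition is_laplace_pi c l1 l2 m1 m2 (alpha : C) (x : state) (v : C) : Prop :=
  is_RInt_gen (fun t : R => Cmult (Cexp (Copp (Cmult alpha (RtoC t))))
                                  (RtoC (ptrans c l1 l2 m1 m2 x t)))
              (at_point 0) (Rbar_locally p_infty) v.

Definition phiB (lam mu : R) (s : C) : C :=
  let w := Cplus (RtoC (lam + mu)) s in
  Cdiv (Cminus w (Csqrt (Cminus (Cmult w w) (RtoC (4 * lam * mu))))) (RtoC (2 * lam)).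

Definition rho2 c l2 m2 : R := l2 / (INR c * m2).
Definition phi2 c l1 l2 m2 (alpha : C) : C :=
  phiB l2 (INR c * m2) (Cplus (RtoC l1) alpha).
Definition r2 c l1 l2 m2 alpha : C := Cmult (RtoC (rho2 c l2 m2)) (phi2 c l1 l2 m2 alpha).
Definition Omega2 c l1 l2 m2 alpha : C :=
  let p := phi2 c l1 l2 m2 alpha in
  Cdiv (Cmult (RtoC (rho2 c l2 m2)) p)
       (Cmult (RtoC l2) (Cminus (RtoC 1) (Cmult (RtoC (rho2 c l2 m2)) (Cmult p p)))).
Definition bigR1 c l1 l2 m2 alpha : C :=
  Cdiv (Cmult (RtoC l1) (Omega2 c l1 l2 m2 alpha))
       (Cminus (RtoC 1) (Cmult (r2 c l1 l2 m2 alpha) (phi2 c l1 l2 m2 alpha))).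
Definition bigR2 c l1 l2 m2 alpha : C :=
  Cmult (r2 c l1 l2 m2 alpha) (phi2 c l1 l2 m2 alpha).

(* the recursively defined numbers v_{i,j}, i >= j >= 0 (values for j > i
   are irrelevant) ; pi x stands for pi_x(alpha) *)
Fixpoint vseq (c : nat) (R1 R2 : C) (pi : state -> C) (i : nat) : nat -> C :=
  match i with
  | O => fun _ => pi (0%nat, (c - 1)%nat)
  | S i' => fun j =>
      match j with
      | O => pi (S i', (c - 1)%nat)
      | S j' => Cmult R1 (Cplus (vseq c R1 R2 pi i' j')
                                (Cmult R2 (Csum (vseq c R1 R2 pi i') (S j') i')))
      end
  end.

(* Main.v *)
Require Import Defs.
From Stdlib Require Import Reals List Arith Lia Lra.
From Coquelicot Require Import Coquelicot.
Open Scope R_scope.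

Notation dst := Defs.dist.

Ltac eqbs := repeat match goal with |- context [Nat.eqb ?a ?b] =>
   destruct (Nat.eqb_spec a b); try (exfalso; lia) end.

Lemma q_up1 c l1 l2 m1 m2 i j : qrate c l1 l2 m1 m2 (i,j) (S i, j) = l1.
Proof. unfold qrate; eqbs; simpl; ring. Qed.
Lemma q_up2 c l1 l2 m1 m2 i j : qrate c l1 l2 m1 m2 (i,j) (i, S j) = l2.
Proof. unfold qrate; eqbs; simpl; ring. Qed.
Lemma q_dn1 c l1 l2 m1 m2 i j : qrate c l1 l2 m1 m2 (S i,j) (i, j) = INR (Nat.min (S i) (c - j)) * m1.
Proof. unfold qrate; eqbs; simpl; ring. Qed.
Lemma q_dn2 c l1 l2 m1 m2 i j : qrate c l1 l2 m1 m2 (i,S j) (i, j) = INR (Nat.min c (S j)) * m2.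
Proof. unfold qrate; eqbs; simpl; ring. Qed.

Definition D1 c m1 (i j : nat) := INR (Nat.min i (c - j)) * m1.
Definition D2 c m2 (j : nat) := INR (Nat.min c j) * m2.

Lemma qout_eq c l1 l2 m1 m2 i j :
  qout c l1 l2 m1 m2 (i,j) = l1 + l2 + D1 c m1 i j + D2 c m2 j.
Proof.
  unfold qout, D1, D2, nbrs, Rsum_list.
  destruct i as [|i]; destruct j as [|j]; cbn [map fold_right app];
  rewrite ?q_up1, ?q_up2, ?q_dn1, ?q_dn2;
  rewrite ?Nat.min_0_l, ?Nat.min_0_r; simpl INR; ring.
Qed.

Definition predf (g : nat -> R) (i : nat) : R :=
  match i with O => 0 | S i' => g i' end.

Lemma dist_S c l1 l2 m1 m2 n i j :
  dst c l1 l2 m1 m2 (S n) (i,j) =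
  dst c l1 l2 m1 m2 n (i,j) * (1 - (l1 + l2 + D1 c m1 i j + D2 c m2 j) / Lam c l1 l2 m1 m2)
  + dst c l1 l2 m1 m2 n (S i, j) * (D1 c m1 (S i) j / Lam c l1 l2 m1 m2)
  + dst c l1 l2 m1 m2 n (i, S j) * (D2 c m2 (S j) / Lam c l1 l2 m1 m2)
  + predf (fun i' => dst c l1 l2 m1 m2 n (i', j)) i * (l1 / Lam c l1 l2 m1 m2)
  + predf (fun j' => dst c l1 l2 m1 m2 n (i, j')) j * (l2 / Lam c l1 l2 m1 m2).
Proof.
  change (dst c l1 l2 m1 m2 (S n) (i,j)) with
   (dst c l1 l2 m1 m2 n (i,j) * (1 - qout c l1 l2 m1 m2 (i,j) / Lam c l1 l2 m1 m2) +
      Rsum_list (map (fun x => dst c l1 l2 m1 m2 n x *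
                               (qrate c l1 l2 m1 m2 x (i,j) / Lam c l1 l2 m1 m2))
                     (nbrs (i,j)))).
  rewrite qout_eq. unfold nbrs, Rsum_list, D1, D2.
  destruct i as [|i]; destruct j as [|j]; cbn [map fold_right app];
  rewrite ?q_dn1, ?q_dn2, ?q_up1, ?q_up2; simpl predf; ring.
Qed.

Lemma D1_bnd c m1 i j : 0 < m1 -> 0 <= D1 c m1 i j <= INR c * m1.
Proof. intros; unfold D1; split; [apply Rmult_le_pos; [apply pos_INR|lra]|].
  apply Rmult_le_compat_r; [lra|]. apply le_INR; lia. Qed.
Lemma D2_bnd c m2 j : 0 < m2 -> 0 <= D2 c m2 j <= INR c * m2.
Proof. intros; unfold D2; split; [apply Rmult_le_pos; [apply pos_INR|lra]|].
  apply Rmult_le_compat_r; [lra|]. apply le_INR; lia. Qed.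

Lemma div_le1 x y : 0 < y -> x <= y -> x / y <= 1.
Proof. intros. unfold Rdiv. replace 1 with (y * / y) by (field; lra).
  apply Rmult_le_compat_r; [left; apply Rinv_0_lt_compat; lra| lra]. Qed.

Lemma Lam_pos c l1 l2 m1 m2 : 0 < l1 -> 0 < l2 -> 0 < m1 -> 0 < m2 -> 0 < Lam c l1 l2 m1 m2.
Proof. intros; unfold Lam. pose proof (pos_INR c). nra. Qed.

Lemma dist_nonneg c l1 l2 m1 m2 n y : 0 < l1 -> 0 < l2 -> 0 < m1 -> 0 < m2 ->
  0 <= dst c l1 l2 m1 m2 n y.
Proof.
  intros H1 H2 H3 H4. pose proof (Lam_pos c l1 l2 m1 m2 H1 H2 H3 H4) as HL.
  revert y; induction n as [|n IH]; intros [i j].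
  - simpl. match goal with |- context [if ?b then _ else _] => destruct b end; lra.
  - rewrite dist_S.
    assert (Hq : 0 <= 1 - (l1 + l2 + D1 c m1 i j + D2 c m2 j) / Lam c l1 l2 m1 m2).
    { destruct (D1_bnd c m1 i j H3). destruct (D2_bnd c m2 j H4).
      assert ((l1 + l2 + D1 c m1 i j + D2 c m2 j) / Lam c l1 l2 m1 m2 <= 1).
      { apply div_le1; [lra|]. unfold Lam. rewrite Rmult_plus_distr_l. lra. } lra. }
    destruct (D1_bnd c m1 (S i) j H3). destruct (D2_bnd c m2 (S j) H4).
    assert (H1' : forall g k, (forall k', 0 <= g k') -> 0 <= predf g k).
    { intros g [|k] Hg; simpl; [lra|apply Hg]. }
    assert (0 <= / Lam c l1 l2 m1 m2) by (left; apply Rinv_0_lt_compat; lra).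
    repeat apply Rplus_le_le_0_compat; apply Rmult_le_pos;
      try apply IH; try assumption;
      try (apply H1'; intros; apply IH);
      try (unfold Rdiv; apply Rmult_le_pos; lra).
Qed.

Lemma dist_supp c l1 l2 m1 m2 n i j : (n < i + j)%nat -> dst c l1 l2 m1 m2 n (i,j) = 0.
Proof.
  revert i j; induction n as [|n IH]; intros i j Hn.
  - simpl. destruct i; destruct j; simpl; try lra; lia.
  - rewrite dist_S. rewrite (IH i j), (IH (S i) j), (IH i (S j)) by lia.
    destruct i as [|i]; destruct j as [|j]; simpl predf;
     rewrite ?IH by lia; ring.
Qed.

Fixpoint rs (f : nat -> R) (n : nat) : R :=
  match n with O => 0 | S k => rs f k + f k end.

Lemma rs_ext f g n : (forall k, (k < n)%nat -> f k = g k) -> rs f n = rs g n.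
Proof. induction n; intros H; simpl; auto. rewrite IHn by (intros; apply H; lia). rewrite H by lia; auto. Qed.
Lemma rs_plus f g n : rs (fun k => f k + g k) n = rs f n + rs g n.
Proof. induction n; simpl; [ring|rewrite IHn; ring]. Qed.
Lemma rs_scal a f n : rs (fun k => f k * a) n = rs f n * a.
Proof. induction n; simpl; [ring|rewrite IHn; ring]. Qed.
Lemma rs_shift f n : rs (fun k => f (S k)) n = rs f (S n) - f O.
Proof. induction n; simpl in *; [ring|]. rewrite IHn. ring. Qed.
Lemma rs_pred f n : rs (predf f) (S n) = rs f n.
Proof. induction n; simpl in *; [ring|]. rewrite <- IHn. simpl. ring. Qed.
Lemma rs_nonneg f n : (forall k, 0 <= f k) -> 0 <= rs f n.
Proof. intros H; induction n; simpl; [lra|]. pose proof (H n); lra. Qed.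
Lemma rs_ge_term f n k : (forall k, 0 <= f k) -> (k < n)%nat -> f k <= rs f n.
Proof. intros H; induction n; intros Hk; [lia|]. simpl.
  destruct (Nat.eq_dec k n) as [->|Hne].
  - pose proof (rs_nonneg f n H); lra.
  - pose proof (H n); assert (f k <= rs f n) by (apply IHn; lia); lra. Qed.
Lemma rs_zero f n : (forall k, (k < n)%nat -> f k = 0) -> rs f n = 0.
Proof. intros H; rewrite (rs_ext f (fun _ => 0)) by auto. clear; induction n; simpl; lra. Qed.

Definition box (g : nat * nat -> R) (N : nat) : R :=
  rs (fun i => rs (fun j => g (i,j)) N) N.


Lemma box_plus f g N : box (fun p => f p + g p) N = box f N + box g N.
Proof. unfold box. rewrite <- rs_plus. apply rs_ext; intros. apply rs_plus. Qed.
Lemma box_scal f a N : box (fun p => f p * a) N = box f N * a.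
Proof. unfold box. rewrite <- rs_scal. apply rs_ext; intros. apply rs_scal. Qed.
Lemma box_ext f g N : (forall p, f p = g p) -> box f N = box g N.
Proof. intros H; unfold box; apply rs_ext; intros; apply rs_ext; intros; apply H. Qed.
Lemma rs_shift0 g N : g O = 0 -> g N = 0 -> rs (fun k => g (S k)) N = rs g N.
Proof. intros; rewrite rs_shift; simpl; lra. Qed.
Lemma rs_pred0 g N : g (pred N) = 0 -> rs (predf g) N = rs g N.
Proof. destruct N as [|N]; intros H; [reflexivity|]. rewrite rs_pred. simpl in *. lra. Qed.

Lemma box_flow (d A B : nat * nat -> R) (a b : R) N :
  (forall j, A (O,j) = 0) -> (forall i, B (i,O) = 0) ->
  (forall i j, (N <= S i)%nat \/ (N <= S j)%nat -> d (i,j) = 0) ->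
  box (fun p => d p * (1 - (a + b + A p + B p)) + d (S (fst p), snd p) * A (S (fst p), snd p)
       + d (fst p, S (snd p)) * B (fst p, S (snd p))
       + predf (fun i' => d (i', snd p)) (fst p) * a
       + predf (fun j' => d (fst p, j')) (snd p) * b) N = box d N.
Proof.
  intros HA HB Hd.
  rewrite !box_plus.
  rewrite (box_ext (fun p => d p * (1 - (a + b + A p + B p)))
    (fun p => d p + (- (d p * a) + (- (d p * b) + (- (d p * A p) + - (d p * B p)))))) by (intros; ring).
  rewrite !box_plus.
  assert (Hopp : forall f, box (fun p => - f p) N = - box f N).
  { intros f. rewrite (box_ext _ (fun p => f p * (-1))) by (intros; ring). rewrite box_scal; ring. }
  rewrite !Hopp, !box_scal.
  assert (E1 : box (fun p => d (S (fst p), snd p) * A (S (fst p), snd p)) N = box (fun p => d p * A p) N).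
  { unfold box; simpl.
    apply (rs_shift0 (fun i => rs (fun j => d (i,j) * A (i,j)) N)).
    - apply rs_zero; intros; rewrite HA; ring.
    - apply rs_zero; intros; rewrite Hd by lia; ring. }
  assert (E2 : box (fun p => d (fst p, S (snd p)) * B (fst p, S (snd p))) N = box (fun p => d p * B p) N).
  { unfold box; simpl. apply rs_ext; intros i Hi.
    apply (rs_shift0 (fun j => d (i,j) * B (i,j))).
    - rewrite HB; ring.
    - rewrite Hd by lia; ring. }
  assert (E3 : box (fun p => predf (fun i' => d (i', snd p)) (fst p)) N = box d N).
  { unfold box; simpl.
    rewrite (rs_ext _ (predf (fun i => rs (fun j => d (i,j)) N))) by (intros [|i] _; simpl; auto; apply rs_zero; auto).
    apply rs_pred0. apply rs_zero; intros; apply Hd; lia. }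
  assert (E4 : box (fun p => predf (fun j' => d (fst p, j')) (snd p)) N = box d N).
  { unfold box; simpl. apply rs_ext; intros i Hi.
    apply (rs_pred0 (fun j => d (i,j))). apply Hd; lia. }
  rewrite E1, E2, E3, E4. ring.
Qed.

Lemma mass c l1 l2 m1 m2 n N : 0 < l1 -> 0 < l2 -> 0 < m1 -> 0 < m2 -> (n < N)%nat ->
  box (dst c l1 l2 m1 m2 n) N = 1.
Proof.
  intros H1 H2 H3 H4. pose proof (Lam_pos c l1 l2 m1 m2 H1 H2 H3 H4) as HL.
  revert N; induction n as [|n IH]; intros N HN.
  - destruct N as [|N]; [lia|]. unfold box.
    assert (F : forall f n, rs f (S n) = f O + rs (fun k => f (S k)) n) by (intros; rewrite rs_shift; ring).
    rewrite F. rewrite (F (fun j => dst c l1 l2 m1 m2 0 (0%nat, j))).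
    rewrite (rs_zero (fun k => dst c l1 l2 m1 m2 0 (0%nat, S k))) by (intros; reflexivity).
    rewrite rs_zero by (intros; apply rs_zero; intros; reflexivity). simpl. ring.
  - rewrite <- (IH N) by lia.
    rewrite <- (box_flow (dst c l1 l2 m1 m2 n) (fun p => D1 c m1 (fst p) (snd p) / Lam c l1 l2 m1 m2)
       (fun p => D2 c m2 (snd p) / Lam c l1 l2 m1 m2) (l1 / Lam c l1 l2 m1 m2) (l2 / Lam c l1 l2 m1 m2) N).
    + apply box_ext. intros [i j]. rewrite dist_S. simpl. field. lra.
    + intros j; simpl; unfold D1; rewrite Nat.min_0_l; simpl; unfold Rdiv; ring.
    + intros i; simpl; unfold D2; rewrite Nat.min_0_r; simpl; unfold Rdiv; ring.
    + intros i j Hij; apply dist_supp; lia.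
Qed.

Lemma dist_le1 c l1 l2 m1 m2 n y : 0 < l1 -> 0 < l2 -> 0 < m1 -> 0 < m2 ->
  dst c l1 l2 m1 m2 n y <= 1.
Proof.
  intros H1 H2 H3 H4. destruct y as [i j].
  set (N := S (n + i + j)).
  rewrite <- (mass c l1 l2 m1 m2 n N H1 H2 H3 H4) by lia.
  unfold box.
  eapply Rle_trans; [| apply (rs_ge_term _ N i); [|lia]].
  - apply (rs_ge_term (fun j => dst c l1 l2 m1 m2 n (i,j)) N j); [|lia].
    intros; apply dist_nonneg; auto.
  - intros; apply rs_nonneg; intros; apply dist_nonneg; auto.
Qed.

Lemma rad_inf a : (forall x, CV_disk a x) -> forall t, Rbar_lt (Rabs t) (CV_radius a).
Proof.
  intros H t. pose proof (CV_radius_ge_0 a) as H0.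
  destruct (CV_radius a) as [r| |] eqn:E; simpl in *; auto.
  destruct (Rlt_dec (Rabs t) r) as [Hl|Hl]; auto. exfalso.
  apply (CV_disk_outside a (r + 1)).
  - rewrite E. simpl. rewrite Rabs_pos_eq; lra.
  - apply is_lim_seq_abs_0. apply ex_series_lim_0. apply H.
Qed.

Definition bexp (L : R) (n : nat) : R := L ^ n / INR (fact n).

Lemma bexp_disk L x : 0 < L -> CV_disk (bexp L) x.
Proof.
  intros HL. apply CV_disk_DAlembert with 0; [| |left; reflexivity].
  - intros n. unfold bexp. apply Rmult_integral_contrapositive; split.
    + apply pow_nonzero; lra.
    + apply Rinv_neq_0_compat, not_0_INR, fact_neq_0.
  - apply is_lim_seq_ext with (fun n => L * / INR (S n)).
    + intros n.
      assert (INR (fact n) <> 0) by apply (not_0_INR _ (fact_neq_0 n)).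
      assert (INR (S n) <> 0) by (apply not_0_INR; lia).
      assert (L ^ n <> 0) by (apply pow_nonzero; lra).
      assert (E : bexp L (S n) / bexp L n = L * / INR (S n)).
      { unfold bexp. rewrite fact_simpl, mult_INR. simpl pow. field; repeat split; auto; lra. }
      rewrite E, Rabs_pos_eq; auto.
      assert (0 < INR (S n)) by (apply lt_0_INR; lia).
      left; apply Rmult_lt_0_compat; [lra|apply Rinv_0_lt_compat; lra].
    + replace 0 with (L * 0) by ring.
      apply (is_lim_seq_scal_l _ L (Finite 0)).
      replace (Finite 0) with (Rbar_inv p_infty) by reflexivity.
      apply is_lim_seq_inv; [|discriminate].
      apply (is_lim_seq_incr_1 INR p_infty), is_lim_seq_INR.
Qed.

Notation LL c l1 l2 m1 m2 := (Lam c l1 l2 m1 m2).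

Definition ay c l1 l2 m1 m2 (y : state) (n : nat) : R :=
  Lam c l1 l2 m1 m2 ^ n * dst c l1 l2 m1 m2 n y / INR (fact n).

Definition flow c l1 l2 m1 m2 (g : state -> R) (i j : nat) : R :=
  - (l1 + l2 + D1 c m1 i j + D2 c m2 j) * g (i,j) + D1 c m1 (S i) j * g (S i, j)
  + D2 c m2 (S j) * g (i, S j) + predf (fun i' => g (i',j)) i * l1
  + predf (fun j' => g (i,j')) j * l2.

Lemma ay_disk c l1 l2 m1 m2 y x : 0 < l1 -> 0 < l2 -> 0 < m1 -> 0 < m2 ->
  CV_disk (ay c l1 l2 m1 m2 y) x.
Proof.
  intros H1 H2 H3 H4. pose proof (Lam_pos c l1 l2 m1 m2 H1 H2 H3 H4) as HL.
  unfold CV_disk.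
  apply (ex_series_le (V := R_CompleteNormedModule) _ (fun n => Rabs (bexp (Lam c l1 l2 m1 m2) n * x ^ n))).
  - intros n. change (norm (Rabs (ay c l1 l2 m1 m2 y n * x ^ n))) with (Rabs (Rabs (ay c l1 l2 m1 m2 y n * x ^ n))).
    rewrite Rabs_Rabsolu, !Rabs_mult. apply Rmult_le_compat_r; [apply Rabs_pos|].
    unfold ay, bexp. unfold Rdiv. rewrite !Rabs_mult.
    pose proof (dist_nonneg c l1 l2 m1 m2 n y H1 H2 H3 H4).
    pose proof (dist_le1 c l1 l2 m1 m2 n y H1 H2 H3 H4).
    rewrite (Rabs_pos_eq (dst _ _ _ _ _ _ _)) by lra.
    pose proof (Rabs_pos (Lam c l1 l2 m1 m2 ^ n)). pose proof (Rabs_pos (/ INR (fact n))).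
    rewrite <- (Rmult_1_r (Rabs (Lam c l1 l2 m1 m2 ^ n))) at 2.
    apply Rmult_le_compat_r; auto. apply Rmult_le_compat_l; auto.
  - apply bexp_disk; auto.
Qed.

Lemma ptrans_eq c l1 l2 m1 m2 y t :
  ptrans c l1 l2 m1 m2 y t = exp (- (Lam c l1 l2 m1 m2 * t)) * PSeries (ay c l1 l2 m1 m2 y) t.
Proof.
  unfold ptrans, PSeries. rewrite <- Series_scal_l. apply Series_ext. intros n.
  unfold ay. rewrite Rpow_mult_distr. unfold Rdiv. ring.
Qed.

Lemma PS_derive_ay c l1 l2 m1 m2 i j n : 0 < l1 -> 0 < l2 -> 0 < m1 -> 0 < m2 ->
  PS_derive (ay c l1 l2 m1 m2 (i,j)) n =
  Lam c l1 l2 m1 m2 * ay c l1 l2 m1 m2 (i,j) n + flow c l1 l2 m1 m2 (fun y => ay c l1 l2 m1 m2 y n) i j.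
Proof.
  intros H1 H2 H3 H4. pose proof (Lam_pos c l1 l2 m1 m2 H1 H2 H3 H4) as HL.
  unfold PS_derive, ay, flow. rewrite dist_S. rewrite fact_simpl, mult_INR.
  assert (INR (fact n) <> 0) by apply (not_0_INR _ (fact_neq_0 n)).
  assert (INR (S n) <> 0) by (apply not_0_INR; lia).
  destruct i; destruct j; simpl predf; simpl pow; field; repeat split; auto; lra.
Qed.

Lemma disk0 x : CV_disk (fun _ => 0) x.
Proof.
  unfold CV_disk. apply (ex_series_le (V := R_CompleteNormedModule) _ (fun n => Rabs (bexp 1 n * x ^ n))).
  - intros n. change (norm (Rabs (0 * x ^ n))) with (Rabs (Rabs (0 * x ^ n))).
    rewrite Rmult_0_l, Rabs_R0, Rabs_R0. apply Rabs_pos.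
  - apply bexp_disk; lra.
Qed.

Lemma PSeries_lin (u v : nat -> R) k x : CV_disk u x -> CV_disk v x ->
  PSeries (fun n => k * u n + v n) x = k * PSeries u x + PSeries v x.
Proof.
  intros Hu Hv. rewrite <- PSeries_scal.
  rewrite <- PSeries_plus; [| apply CV_disk_correct, CV_disk_scal; auto| apply CV_disk_correct; auto].
  apply PSeries_ext. intros; reflexivity.
Qed.

Lemma disk_lin (u v : nat -> R) k x : CV_disk u x -> CV_disk v x ->
  CV_disk (fun n => k * u n + v n) x.
Proof.
  intros Hu Hv. pose proof (CV_disk_plus _ _ x (CV_disk_scal k u x Hu) Hv) as H.
  unfold CV_disk in *. eapply ex_series_ext; [|exact H]. intros n; reflexivity.
Qed.

Lemma predf_disk (g : nat -> nat -> R) i x : (forall i', CV_disk (g i') x) ->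
  CV_disk (fun n => predf (fun i' => g i' n) i) x.
Proof. intros H; destruct i; simpl; [apply disk0| apply H]. Qed.

Lemma predf_PSeries (g : nat -> nat -> R) i x :
  PSeries (fun n => predf (fun i' => g i' n) i) x = predf (fun i' => PSeries (g i') x) i.
Proof. destruct i; simpl; [apply PSeries_const_0| reflexivity]. Qed.

Lemma PSeries_flow c l1 l2 m1 m2 i j x : 0 < l1 -> 0 < l2 -> 0 < m1 -> 0 < m2 ->
  PSeries (fun n => flow c l1 l2 m1 m2 (fun y => ay c l1 l2 m1 m2 y n) i j) x =
  flow c l1 l2 m1 m2 (fun y => PSeries (ay c l1 l2 m1 m2 y) x) i j.
Proof.
  intros H1 H2 H3 H4. unfold flow.
  assert (Hd : forall y, CV_disk (ay c l1 l2 m1 m2 y) x) by (intros; apply ay_disk; auto).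
  set (q0 := - (l1 + l2 + D1 c m1 i j + D2 c m2 j)).
  set (g1 := fun i' => ay c l1 l2 m1 m2 (i', j)).
  set (g2 := fun j' => ay c l1 l2 m1 m2 (i, j')).
  rewrite (PSeries_ext _ (fun n => q0 * ay c l1 l2 m1 m2 (i,j) n + (D1 c m1 (S i) j * ay c l1 l2 m1 m2 (S i,j) n
     + (D2 c m2 (S j) * ay c l1 l2 m1 m2 (i,S j) n + (l1 * predf (fun i' => g1 i' n) i
     + (l2 * predf (fun j' => g2 j' n) j + 0)))))) by (intros; unfold g1, g2; cbv beta; ring).
  assert (Hp1 : CV_disk (fun n => predf (fun i' => g1 i' n) i) x) by (apply predf_disk; intros; apply Hd).
  assert (Hp2 : CV_disk (fun n => predf (fun j' => g2 j' n) j) x) by (apply predf_disk; intros; apply Hd).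
  rewrite PSeries_lin; [|auto| repeat apply disk_lin; auto; apply disk0].
  rewrite PSeries_lin; [|auto| repeat apply disk_lin; auto; apply disk0].
  rewrite PSeries_lin; [|auto| repeat apply disk_lin; auto; apply disk0].
  rewrite PSeries_lin; [|auto| repeat apply disk_lin; auto; apply disk0].
  rewrite PSeries_lin; [|auto| apply disk0].
  rewrite PSeries_const_0, !predf_PSeries. unfold g1, g2. cbv beta. ring.
Qed.

Lemma disk_ext u v x : (forall n, u n = v n) -> CV_disk u x -> CV_disk v x.
Proof. intros H Hu. unfold CV_disk in *. eapply ex_series_ext; [|exact Hu]. intros n; cbv beta; rewrite H; auto. Qed.

Lemma flow_disk c l1 l2 m1 m2 i j x : 0 < l1 -> 0 < l2 -> 0 < m1 -> 0 < m2 ->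
  CV_disk (fun n => flow c l1 l2 m1 m2 (fun y => ay c l1 l2 m1 m2 y n) i j) x.
Proof.
  intros H1 H2 H3 H4.
  assert (Hd : forall y, CV_disk (ay c l1 l2 m1 m2 y) x) by (intros; apply ay_disk; auto).
  set (g1 := fun i' => ay c l1 l2 m1 m2 (i', j)).
  set (g2 := fun j' => ay c l1 l2 m1 m2 (i, j')).
  assert (Hp1 : CV_disk (fun n => predf (fun i' => g1 i' n) i) x) by (apply predf_disk; intros; apply Hd).
  assert (Hp2 : CV_disk (fun n => predf (fun j' => g2 j' n) j) x) by (apply predf_disk; intros; apply Hd).
  apply (disk_ext (fun n => (- (l1 + l2 + D1 c m1 i j + D2 c m2 j)) * ay c l1 l2 m1 m2 (i,j) n + (D1 c m1 (S i) j * ay c l1 l2 m1 m2 (S i,j) n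
     + (D2 c m2 (S j) * ay c l1 l2 m1 m2 (i,S j) n + (l1 * predf (fun i' => g1 i' n) i
     + (l2 * predf (fun j' => g2 j' n) j + 0)))))).
  - intros; unfold flow, g1, g2; cbv beta; ring.
  - repeat apply disk_lin; auto; apply disk0.
Qed.

Lemma pt_deriv c l1 l2 m1 m2 i j t : 0 < l1 -> 0 < l2 -> 0 < m1 -> 0 < m2 ->
  is_derive (ptrans c l1 l2 m1 m2 (i,j)) t (flow c l1 l2 m1 m2 (fun y => ptrans c l1 l2 m1 m2 y t) i j).
Proof.
  intros H1 H2 H3 H4.
  set (L := Lam c l1 l2 m1 m2).
  set (P := PSeries (ay c l1 l2 m1 m2 (i,j))).
  apply is_derive_ext with (fun t => exp (- (L * t)) * P t).
  { intros; rewrite ptrans_eq; reflexivity. }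
  assert (HdP : is_derive P t (PSeries (PS_derive (ay c l1 l2 m1 m2 (i,j))) t)).
  { apply is_derive_PSeries. apply rad_inf. intros; apply ay_disk; auto. }
  assert (HdE : is_derive (fun t => exp (- (L * t))) t (- L * exp (- (L * t)))).
  { auto_derive; auto. ring. }
  pose proof (is_derive_mult _ _ t _ _ HdE HdP) as HM.
  assert (HM' := HM (fun a b => Rmult_comm a b)). clear HM.
  apply is_derive_ext with (fun x => mult (exp (-(L*x))) (P x)); [intros; reflexivity|].
  replace (flow c l1 l2 m1 m2 (fun y => ptrans c l1 l2 m1 m2 y t) i j) with
    (plus (mult (-L * exp(-(L*t))) (P t)) (mult (exp (-(L*t))) (PSeries (PS_derive (ay c l1 l2 m1 m2 (i,j))) t))); [exact HM'|].
    rewrite (PSeries_ext _ (fun n => L * ay c l1 l2 m1 m2 (i,j) n + flow c l1 l2 m1 m2 (fun y => ay c l1 l2 m1 m2 y n) i j))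
      by (intros; apply PS_derive_ay; auto).
    rewrite PSeries_lin; [| apply ay_disk; auto| apply flow_disk; auto].
    rewrite PSeries_flow by auto.
    unfold flow. change (@mult R_Ring) with Rmult; change (@plus R_Ring) with Rplus.
    match goal with |- @eq _ ?a ?b => change (@eq R a b) end.
    destruct i; destruct j; simpl predf; rewrite !ptrans_eq; fold L; fold P;
    generalize (exp (- (L * t))); intro e; ring_simplify; reflexivity.
Qed.

Lemma exp_PS L t : exp (L * t) = PSeries (bexp L) t.
Proof.
  rewrite exp_Reals. unfold PSeries. apply Series_ext. intros n. unfold bexp.
  rewrite Rpow_mult_distr. unfold Rdiv. ring.
Qed.

Lemma pt_bounds c l1 l2 m1 m2 y t : 0 < l1 -> 0 < l2 -> 0 < m1 -> 0 < m2 -> 0 <= t ->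
  0 <= ptrans c l1 l2 m1 m2 y t <= 1.
Proof.
  intros H1 H2 H3 H4 Ht. pose proof (Lam_pos c l1 l2 m1 m2 H1 H2 H3 H4) as HL.
  rewrite ptrans_eq. set (L := Lam c l1 l2 m1 m2).
  assert (Hex : ex_series (fun k => bexp L k * t ^ k)).
  { pose proof (CV_disk_correct _ t (bexp_disk L t HL)) as H. unfold ex_pseries in H.
    eapply ex_series_ext; [|exact H]. intros n.
    change (scal (pow_n t n) (bexp L n)) with (pow_n t n * bexp L n). rewrite pow_n_pow. apply Rmult_comm. }
  assert (Hterm : forall n, 0 <= ay c l1 l2 m1 m2 y n * t ^ n <= bexp L n * t ^ n).
  { intros n. unfold ay, bexp. fold L.
    pose proof (dist_nonneg c l1 l2 m1 m2 n y H1 H2 H3 H4).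
    pose proof (dist_le1 c l1 l2 m1 m2 n y H1 H2 H3 H4).
    assert (0 < / INR (fact n)) by (apply Rinv_0_lt_compat, lt_0_INR, lt_O_fact).
    assert (0 <= L ^ n) by (apply pow_le; unfold L; lra). assert (0 <= t ^ n) by (apply pow_le; lra).
    unfold Rdiv. split.
    - repeat apply Rmult_le_pos; lra.
    - apply Rmult_le_compat_r; auto. apply Rmult_le_compat_r; [lra|].
      rewrite <- (Rmult_1_r (L ^ n)) at 2. apply Rmult_le_compat_l; lra. }
  assert (Hup : PSeries (ay c l1 l2 m1 m2 y) t <= exp (L * t)).
  { rewrite exp_PS. unfold PSeries. apply Series_le; auto. }
  assert (Hlo : 0 <= PSeries (ay c l1 l2 m1 m2 y) t).
  { rewrite <- (PSeries_const_0 t). unfold PSeries. apply Series_le.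
    - intros n; split; [lra|]. rewrite Rmult_0_l. apply Hterm.
    - apply (ex_series_le (V := R_CompleteNormedModule)) with (fun k => bexp L k * t ^ k); auto.
      intros n. change (norm (ay c l1 l2 m1 m2 y n * t ^ n)) with (Rabs (ay c l1 l2 m1 m2 y n * t ^ n)).
      rewrite Rabs_pos_eq; apply Hterm. }
  pose proof (exp_pos (- (L * t))).
  split; [apply Rmult_le_pos; lra|].
  replace 1 with (exp (- (L * t)) * exp (L * t)) by (rewrite <- exp_plus; replace (- (L * t) + L * t) with 0 by ring; apply exp_0).
  apply Rmult_le_compat_l; lra.
Qed.

Lemma pt_0 c l1 l2 m1 m2 y : ptrans c l1 l2 m1 m2 y 0 = dst c l1 l2 m1 m2 0 y.
Proof.
  rewrite ptrans_eq, PSeries_0. rewrite Rmult_0_r, Ropp_0, exp_0. unfold ay. simpl. field.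
Qed.

Lemma pt_cont c l1 l2 m1 m2 y t : 0 < l1 -> 0 < l2 -> 0 < m1 -> 0 < m2 ->
  continuous (ptrans c l1 l2 m1 m2 y) t.
Proof.
  intros. destruct y as [i j]. apply (ex_derive_continuous (K:=R_AbsRing) (V:=R_NormedModule)). eexists. apply pt_deriv; auto.
Qed.

Lemma gen_lim (F : R -> C) (v : C) :
  @is_RInt_gen C_R_NormedModule F (at_point 0) (Rbar_locally p_infty) v ->
  is_lim_seq (fun n => RInt (fun t => fst (F t)) 0 (INR n)) (fst v) /\
  is_lim_seq (fun n => RInt (fun t => snd (F t)) 0 (INR n)) (snd v).
Proof.
  intros H.
  assert (K : forall eps : posreal, exists N : nat, forall n, (N <= n)%nat ->
     Rabs (RInt (fun t => fst (F t)) 0 (INR n) - fst v) < eps /\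
     Rabs (RInt (fun t => snd (F t)) 0 (INR n) - snd v) < eps).
  { intros eps. unfold is_RInt_gen, filterlimi, filter_le, filtermapi in H.
    specialize (H (ball v eps) (locally_ball v eps)).
    destruct H as [Q R0 HQ HR HP]. destruct HR as [M HM].
    destruct (INR_archimed 1 M) as [N HN]; [lra|].
    exists N. intros n Hn.
    assert (HnM : M < INR n) by (apply le_INR in Hn; lra).
    destruct (HP 0 (INR n) HQ (HM _ HnM)) as [y [Hy Hb]].
    simpl in Hy.
    pose proof (is_RInt_fct_extend_fst (U:=R_NormedModule) (V:=R_NormedModule) F 0 (INR n) y Hy) as Hf.
    pose proof (is_RInt_fct_extend_snd (U:=R_NormedModule) (V:=R_NormedModule) F 0 (INR n) y Hy) as Hs.
    apply (is_RInt_unique (V:=R_CompleteNormedModule)) in Hf. apply (is_RInt_unique (V:=R_CompleteNormedModule)) in Hs.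
    destruct Hb as [Hb1 Hb2].
    change (Rabs (fst y - fst v) < eps) in Hb1.
    change (Rabs (snd y - snd v) < eps) in Hb2.
    change (RInt (fun t => @fst R R (F t)) 0 (INR n) = @fst R R y) in Hf.
    change (RInt (fun t => @snd R R (F t)) 0 (INR n) = @snd R R y) in Hs.
    rewrite Hf, Hs. split; assumption. }
  split; apply is_lim_seq_spec; intros eps; destruct (K eps) as [N HN]; exists N; intros n Hn; apply HN; auto.
Qed.

Lemma flow_expand c l1 l2 m1 m2 (g : state -> R) i j :
  flow c l1 l2 m1 m2 g i j =
  (- (l1 + l2 + D1 c m1 i j + D2 c m2 j)) * g (i,j) + (D1 c m1 (S i) j * g (S i, j)
  + (D2 c m2 (S j) * g (i, S j) + (l1 * predf (fun i' => g (i',j)) i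
  + (l2 * predf (fun j' => g (i,j')) j + 0)))).
Proof. unfold flow; ring. Qed.

Lemma flow_scal c l1 l2 m1 m2 (g : state -> R) k i j :
  flow c l1 l2 m1 m2 (fun x => k * g x) i j = k * flow c l1 l2 m1 m2 g i j.
Proof. unfold flow; destruct i; destruct j; simpl; ring. Qed.

Lemma cont_lin (f g : R -> R) k t : continuous f t -> continuous g t ->
  continuous (fun s => k * f s + g s) t.
Proof.
  intros. apply (continuous_plus (fun s => k * f s) g); auto.
  apply (continuous_mult (fun _ => k) f); auto. apply continuous_const.
Qed.

Lemma cont_predf (g : nat -> R -> R) i t : (forall i', continuous (g i') t) ->
  continuous (fun s => predf (fun i' => g i' s) i) t.
Proof. intros H; destruct i; simpl; [apply continuous_const| apply H]. Qed.

Lemma flow_cont c l1 l2 m1 m2 (g : state -> R -> R) i j t :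
  (forall x, continuous (g x) t) -> continuous (fun s => flow c l1 l2 m1 m2 (fun x => g x s) i j) t.
Proof.
  intros H.
  apply (continuous_ext (fun s => (- (l1 + l2 + D1 c m1 i j + D2 c m2 j)) * g (i,j) s + (D1 c m1 (S i) j * g (S i, j) s
  + (D2 c m2 (S j) * g (i, S j) s + (l1 * predf (fun i' => g (i',j) s) i
  + (l2 * predf (fun j' => g (i,j') s) j + 0)))))).
  { intros s. rewrite flow_expand. reflexivity. }
  repeat apply cont_lin; auto; try apply continuous_const;
   apply (cont_predf (fun i' => g (i', j))) || apply (cont_predf (fun j' => g (i, j'))); auto.
Qed.

Lemma RInt_lin (f g : R -> R) k a b : ex_RInt f a b -> ex_RInt g a b ->
  RInt (fun t => k * f t + g t) a b = k * RInt f a b + RInt g a b.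
Proof.
  intros Hf Hg.
  assert (E : RInt (fun t => k * f t) a b = k * RInt f a b) by (apply (RInt_scal (V:=R_CompleteNormedModule) f a b k); auto).
  rewrite (RInt_plus (V:=R_CompleteNormedModule) (fun t => k * f t) g); auto.
  - rewrite E; reflexivity.
  - apply (ex_RInt_scal (V:=R_NormedModule) f a b k); auto.
Qed.

Lemma ex_RInt_lin (f g : R -> R) k a b : ex_RInt f a b -> ex_RInt g a b ->
  ex_RInt (fun t => k * f t + g t) a b.
Proof.
  intros Hf Hg. apply (ex_RInt_plus (V:=R_NormedModule) (fun t => k * f t) g); auto.
  apply (ex_RInt_scal (V:=R_NormedModule) f a b k); auto.
Qed.

Lemma ex_RInt_predf (g : nat -> R -> R) i a b : (forall i', ex_RInt (g i') a b) ->
  ex_RInt (fun s => predf (fun i' => g i' s) i) a b.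
Proof. intros H; destruct i; simpl; [apply (ex_RInt_const (V:=R_NormedModule)) | apply H]. Qed.

Lemma RInt_predf (g : nat -> R -> R) i a b :
  RInt (fun s => predf (fun i' => g i' s) i) a b = predf (fun i' => RInt (g i') a b) i.
Proof. destruct i; simpl; [|reflexivity]. rewrite (RInt_const (V:=R_CompleteNormedModule)). 
  change (scal (b - a) 0) with ((b - a) * 0). ring. Qed.

Lemma RInt_flow c l1 l2 m1 m2 (g : state -> R -> R) i j a b :
  (forall x, ex_RInt (g x) a b) ->
  RInt (fun s => flow c l1 l2 m1 m2 (fun x => g x s) i j) a b = flow c l1 l2 m1 m2 (fun x => RInt (g x) a b) i j.
Proof.
  intros H.
  assert (H1 : ex_RInt (fun s => predf (fun i' => g (i',j) s) i) a b) by (apply (ex_RInt_predf (fun i' => g (i',j))); auto).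
  assert (H2 : ex_RInt (fun s => predf (fun j' => g (i,j') s) j) a b) by (apply (ex_RInt_predf (fun j' => g (i,j'))); auto).
  assert (H0 : ex_RInt (fun _ => 0) a b) by apply (ex_RInt_const (V:=R_NormedModule)).
  rewrite (RInt_ext _ (fun s => (- (l1 + l2 + D1 c m1 i j + D2 c m2 j)) * g (i,j) s + (D1 c m1 (S i) j * g (S i, j) s
  + (D2 c m2 (S j) * g (i, S j) s + (l1 * predf (fun i' => g (i',j) s) i
  + (l2 * predf (fun j' => g (i,j') s) j + 0)))))) by (intros; apply flow_expand).
  Local Ltac sx H H0 H1 H2 := repeat match goal with
     | |- ex_RInt (fun t => _ * _ + _) _ _ => apply ex_RInt_lin
     | |- ex_RInt (fun _ => 0) _ _ => exact H0
     | |- ex_RInt (fun s => predf _ _) _ _ => first [exact H1 | exact H2]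
     | |- ex_RInt _ _ _ => apply H
     end.
  do 5 (rewrite RInt_lin by sx H H0 H1 H2).
  rewrite (RInt_predf (fun i' => g (i',j))), (RInt_predf (fun j' => g (i,j'))).
  rewrite (RInt_const (V:=R_CompleteNormedModule)). change (scal (b - a) 0) with ((b - a) * 0).
  rewrite flow_expand. match goal with |- @eq _ ?a ?b => change (@eq R a b) end. ring.
Qed.

Lemma lim_lin (u v : nat -> R) k (lu lv : R) : is_lim_seq u lu -> is_lim_seq v lv ->
  is_lim_seq (fun n => k * u n + v n) (k * lu + lv).
Proof. intros Hu Hv. apply is_lim_seq_plus'; auto. apply (is_lim_seq_scal_l u k lu) in Hu. exact Hu. Qed.

Lemma lim_flow c l1 l2 m1 m2 (u : state -> nat -> R) (l : state -> R) i j :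
  (forall x, is_lim_seq (u x) (l x)) ->
  is_lim_seq (fun n => flow c l1 l2 m1 m2 (fun x => u x n) i j) (flow c l1 l2 m1 m2 l i j).
Proof.
  intros H.
  apply is_lim_seq_ext with (fun n => (- (l1 + l2 + D1 c m1 i j + D2 c m2 j)) * u (i,j) n + (D1 c m1 (S i) j * u (S i, j) n
  + (D2 c m2 (S j) * u (i, S j) n + (l1 * predf (fun i' => u (i',j) n) i
  + (l2 * predf (fun j' => u (i,j') n) j + 0))))).
  { intros; symmetry; apply flow_expand. }
  rewrite flow_expand.
  assert (H1 : is_lim_seq (fun n => predf (fun i' => u (i',j) n) i) (predf (fun i' => l (i',j)) i)).
  { destruct i; simpl; [apply is_lim_seq_const| apply H]. }
  assert (H2 : is_lim_seq (fun n => predf (fun j' => u (i,j') n) j) (predf (fun j' => l (i,j')) j)).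
  { destruct j; simpl; [apply is_lim_seq_const| apply H]. }
  repeat apply lim_lin; auto. apply is_lim_seq_const.
Qed.

Ltac rring := match goal with |- @eq _ ?a ?b => change (@eq R a b) end; ring.

Definition Ec (a b t : R) : R := exp (- (a * t)) * cos (b * t).
Definition Es (a b t : R) : R := - (exp (- (a * t)) * sin (b * t)).

Lemma integ_fst (alpha : C) t g :
  fst (Cmult (Cexp (Copp (Cmult alpha (RtoC t)))) (RtoC g)) = Ec (fst alpha) (snd alpha) t * g.
Proof.
  destruct alpha as [a b]. unfold Cmult, Cexp, Copp, RtoC, Ec; simpl.
  replace (- (a * t - b * 0)) with (- (a * t)) by ring.
  replace (- (a * 0 + b * t)) with (- (b * t)) by ring.
  rewrite cos_neg. ring.
Qed.

Lemma integ_snd (alpha : C) t g :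
  snd (Cmult (Cexp (Copp (Cmult alpha (RtoC t)))) (RtoC g)) = Es (fst alpha) (snd alpha) t * g.
Proof.
  destruct alpha as [a b]. unfold Cmult, Cexp, Copp, RtoC, Es; simpl.
  replace (- (a * t - b * 0)) with (- (a * t)) by ring.
  replace (- (a * 0 + b * t)) with (- (b * t)) by ring.
  rewrite sin_neg. ring.
Qed.

Lemma Ec_deriv a b t : is_derive (Ec a b) t (- a * Ec a b t + b * Es a b t).
Proof. unfold Ec, Es. auto_derive; auto. ring. Qed.
Lemma Es_deriv a b t : is_derive (Es a b) t (- a * Es a b t - b * Ec a b t).
Proof. unfold Ec, Es. auto_derive; auto. ring. Qed.

Lemma Ec_bnd a b t : Rabs (Ec a b t) <= exp (- (a * t)).
Proof. unfold Ec. rewrite Rabs_mult, Rabs_pos_eq by (left; apply exp_pos).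
  pose proof (exp_pos (- (a * t))). pose proof (COS_bound (b * t)).
  rewrite <- (Rmult_1_r (exp _)) at 2. apply Rmult_le_compat_l; [lra|]. apply Rabs_le; lra. Qed.
Lemma Es_bnd a b t : Rabs (Es a b t) <= exp (- (a * t)).
Proof. unfold Es. rewrite Rabs_Ropp, Rabs_mult, Rabs_pos_eq by (left; apply exp_pos).
  pose proof (exp_pos (- (a * t))). pose proof (SIN_bound (b * t)).
  rewrite <- (Rmult_1_r (exp _)) at 2. apply Rmult_le_compat_l; [lra|]. apply Rabs_le; lra. Qed.

Lemma Ec_0 a b : Ec a b 0 = 1.
Proof. unfold Ec. rewrite !Rmult_0_r, Ropp_0, exp_0, cos_0. ring. Qed.
Lemma Es_0 a b : Es a b 0 = 0.
Proof. unfold Es. rewrite !Rmult_0_r, Ropp_0, exp_0, sin_0. ring. Qed.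

Lemma exp_lim a : 0 < a -> is_lim_seq (fun n => exp (- (a * INR n))) 0.
Proof.
  intros Ha. apply is_lim_seq_ext with (fun n => exp (- a) ^ n).
  - intros n; induction n; simpl pow.
    + simpl. rewrite Rmult_0_r, Ropp_0, exp_0. reflexivity.
    + rewrite IHn, <- exp_plus, S_INR. f_equal. ring.
  - apply is_lim_seq_geom. rewrite Rabs_pos_eq by (left; apply exp_pos).
    rewrite <- exp_0. apply exp_increasing. lra.
Qed.

Lemma exp_int a B : 0 < a -> 0 <= B -> RInt (fun t => exp (- (a * t))) 0 B <= / a.
Proof.
  intros Ha HB.
  assert (H := is_RInt_derive (V:=R_CompleteNormedModule) (fun t => - exp (- (a * t)) / a) (fun t => exp (- (a * t))) 0 B).
  assert (H1 : forall x, Rmin 0 B <= x <= Rmax 0 B -> is_derive (fun t => - exp (- (a * t)) / a) x (exp (- (a * x)))).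
  { intros x _. auto_derive; auto. field. lra. }
  assert (H2 : forall x, Rmin 0 B <= x <= Rmax 0 B -> continuous (fun t => exp (- (a * t))) x).
  { intros x _. apply (ex_derive_continuous (K:=R_AbsRing) (V:=R_NormedModule)). auto_derive; auto. }
  specialize (H H1 H2).
  apply (is_RInt_unique (V:=R_CompleteNormedModule)) in H. rewrite H.
  change (minus ?x ?y) with (x - y). simpl. rewrite Rmult_0_r, Ropp_0, exp_0.
  pose proof (exp_pos (- (a * B))).
  assert (0 < exp (- (a * B)) * / a) by (apply Rmult_lt_0_compat; auto; apply Rinv_0_lt_compat; auto).
  unfold Rdiv. nra.
Qed.

Definition PP c l1 l2 m1 m2 a b (x : state) t := Ec a b t * ptrans c l1 l2 m1 m2 x t.
Definition QQ c l1 l2 m1 m2 a b (x : state) t := Es a b t * ptrans c l1 l2 m1 m2 x t.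

Lemma PP_deriv c l1 l2 m1 m2 a b i j t : 0 < l1 -> 0 < l2 -> 0 < m1 -> 0 < m2 ->
  is_derive (PP c l1 l2 m1 m2 a b (i,j)) t
   (- a * PP c l1 l2 m1 m2 a b (i,j) t + b * QQ c l1 l2 m1 m2 a b (i,j) t
    + flow c l1 l2 m1 m2 (fun x => PP c l1 l2 m1 m2 a b x t) i j).
Proof.
  intros H1 H2 H3 H4.
  pose proof (is_derive_mult _ _ t _ _ (Ec_deriv a b t) (pt_deriv c l1 l2 m1 m2 i j t H1 H2 H3 H4) (fun x y => Rmult_comm x y)) as HM.
  unfold PP at 1.
  match goal with |- is_derive _ _ ?v => replace v with
   (plus (mult (- a * Ec a b t + b * Es a b t) (ptrans c l1 l2 m1 m2 (i, j) t))
       (mult (Ec a b t) (flow c l1 l2 m1 m2 (fun y : state => ptrans c l1 l2 m1 m2 y t) i j))) end.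
  - exact HM.
  - unfold PP, QQ. rewrite (flow_scal c l1 l2 m1 m2 (fun y => ptrans c l1 l2 m1 m2 y t) (Ec a b t)).
    change (@mult R_Ring) with Rmult; change (@plus R_Ring) with Rplus.
    match goal with |- @eq _ ?a ?b => change (@eq R a b) end. ring.
Qed.

Lemma QQ_deriv c l1 l2 m1 m2 a b i j t : 0 < l1 -> 0 < l2 -> 0 < m1 -> 0 < m2 ->
  is_derive (QQ c l1 l2 m1 m2 a b (i,j)) t
   (- a * QQ c l1 l2 m1 m2 a b (i,j) t - b * PP c l1 l2 m1 m2 a b (i,j) t
    + flow c l1 l2 m1 m2 (fun x => QQ c l1 l2 m1 m2 a b x t) i j).
Proof.
  intros H1 H2 H3 H4.
  pose proof (is_derive_mult _ _ t _ _ (Es_deriv a b t) (pt_deriv c l1 l2 m1 m2 i j t H1 H2 H3 H4) (fun x y => Rmult_comm x y)) as HM.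
  unfold QQ at 1.
  match goal with |- is_derive _ _ ?v => replace v with
   (plus (mult (- a * Es a b t - b * Ec a b t) (ptrans c l1 l2 m1 m2 (i, j) t))
       (mult (Es a b t) (flow c l1 l2 m1 m2 (fun y : state => ptrans c l1 l2 m1 m2 y t) i j))) end.
  - exact HM.
  - unfold PP, QQ. rewrite (flow_scal c l1 l2 m1 m2 (fun y => ptrans c l1 l2 m1 m2 y t) (Es a b t)).
    change (@mult R_Ring) with Rmult; change (@plus R_Ring) with Rplus.
    match goal with |- @eq _ ?a ?b => change (@eq R a b) end. ring.
Qed.

Lemma PP_cont c l1 l2 m1 m2 a b x t : 0 < l1 -> 0 < l2 -> 0 < m1 -> 0 < m2 ->
  continuous (PP c l1 l2 m1 m2 a b x) t.
Proof. intros. destruct x as [i j]. apply (ex_derive_continuous (K:=R_AbsRing) (V:=R_NormedModule)).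
  eexists; apply PP_deriv; auto. Qed.
Lemma QQ_cont c l1 l2 m1 m2 a b x t : 0 < l1 -> 0 < l2 -> 0 < m1 -> 0 < m2 ->
  continuous (QQ c l1 l2 m1 m2 a b x) t.
Proof. intros. destruct x as [i j]. apply (ex_derive_continuous (K:=R_AbsRing) (V:=R_NormedModule)).
  eexists; apply QQ_deriv; auto. Qed.


Lemma cont3 (f g h : R -> R) k1 k2 t : continuous f t -> continuous g t -> continuous h t ->
  continuous (fun s => k1 * f s + k2 * g s + h s) t.
Proof.
  intros Hf Hg Hh.
  apply (continuous_plus (fun s => k1 * f s + k2 * g s) h); auto.
  apply (continuous_plus (fun s => k1 * f s) (fun s => k2 * g s)).
  - apply (continuous_mult (fun _ => k1) f); auto. apply continuous_const.
  - apply (continuous_mult (fun _ => k2) g); auto. apply continuous_const.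
Qed.

Lemma RInt3 (f g h : R -> R) k1 k2 a b : ex_RInt f a b -> ex_RInt g a b -> ex_RInt h a b ->
  RInt (fun s => k1 * f s + k2 * g s + h s) a b = k1 * RInt f a b + k2 * RInt g a b + RInt h a b.
Proof.
  intros Hf Hg Hh.
  rewrite (RInt_ext _ (fun s => k1 * f s + (k2 * g s + (1 * h s + 0)))) by (intros; rring).
  assert (H0 : ex_RInt (fun _ => 0) a b) by apply (ex_RInt_const (V:=R_NormedModule)).
  do 3 (rewrite RInt_lin by (repeat match goal with
     | |- ex_RInt (fun t => _ * _ + _) _ _ => apply ex_RInt_lin
     | |- _ => assumption end)).
  rewrite (RInt_const (V:=R_CompleteNormedModule)). change (scal (b - a) 0) with ((b - a) * 0).
  match goal with |- @eq _ ?a ?b => change (@eq R a b) end. ring.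
Qed.

Lemma FTC_P c l1 l2 m1 m2 a b i j B : 0 < l1 -> 0 < l2 -> 0 < m1 -> 0 < m2 ->
  PP c l1 l2 m1 m2 a b (i,j) B - PP c l1 l2 m1 m2 a b (i,j) 0 =
  - a * RInt (PP c l1 l2 m1 m2 a b (i,j)) 0 B + b * RInt (QQ c l1 l2 m1 m2 a b (i,j)) 0 B
  + flow c l1 l2 m1 m2 (fun x => RInt (PP c l1 l2 m1 m2 a b x) 0 B) i j.
Proof.
  intros H1 H2 H3 H4.
  assert (HP : forall x, ex_RInt (PP c l1 l2 m1 m2 a b x) 0 B)
    by (intros; apply (ex_RInt_continuous (V:=R_CompleteNormedModule)); intros; apply PP_cont; auto).
  assert (HQ : forall x, ex_RInt (QQ c l1 l2 m1 m2 a b x) 0 B)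
    by (intros; apply (ex_RInt_continuous (V:=R_CompleteNormedModule)); intros; apply QQ_cont; auto).
  assert (HF : ex_RInt (fun s => flow c l1 l2 m1 m2 (fun x => PP c l1 l2 m1 m2 a b x s) i j) 0 B).
  { apply (ex_RInt_continuous (V:=R_CompleteNormedModule)); intros.
    apply (flow_cont c l1 l2 m1 m2 (PP c l1 l2 m1 m2 a b)). intros; apply PP_cont; auto. }
  assert (HD : forall x, Rmin 0 B <= x <= Rmax 0 B -> is_derive (PP c l1 l2 m1 m2 a b (i,j)) x
     (- a * PP c l1 l2 m1 m2 a b (i,j) x + b * QQ c l1 l2 m1 m2 a b (i,j) x
    + flow c l1 l2 m1 m2 (fun y => PP c l1 l2 m1 m2 a b y x) i j)).
  { intros. eapply is_derive_ext; [intros; reflexivity|].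
    replace (- a * PP c l1 l2 m1 m2 a b (i,j) x + b * QQ c l1 l2 m1 m2 a b (i,j) x)
     with (-a * PP c l1 l2 m1 m2 a b (i,j) x + b * QQ c l1 l2 m1 m2 a b (i,j) x) by ring.
    apply PP_deriv; auto. }
  assert (HC : forall x, Rmin 0 B <= x <= Rmax 0 B -> continuous (fun t => - a * PP c l1 l2 m1 m2 a b (i,j) t + b * QQ c l1 l2 m1 m2 a b (i,j) t
    + flow c l1 l2 m1 m2 (fun y => PP c l1 l2 m1 m2 a b y t) i j) x).
  { intros; apply cont3; try apply PP_cont; try apply QQ_cont; auto.
    apply (flow_cont c l1 l2 m1 m2 (PP c l1 l2 m1 m2 a b)). intros; apply PP_cont; auto. }
  pose proof (is_RInt_derive (V:=R_CompleteNormedModule) _ _ 0 B HD HC) as H.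
  apply (is_RInt_unique (V:=R_CompleteNormedModule)) in H.
  rewrite RInt3 in H; auto.
  rewrite (RInt_flow c l1 l2 m1 m2 (PP c l1 l2 m1 m2 a b)) in H; auto.

Qed.

Lemma FTC_Q c l1 l2 m1 m2 a b i j B : 0 < l1 -> 0 < l2 -> 0 < m1 -> 0 < m2 ->
  QQ c l1 l2 m1 m2 a b (i,j) B - QQ c l1 l2 m1 m2 a b (i,j) 0 =
  - a * RInt (QQ c l1 l2 m1 m2 a b (i,j)) 0 B + (- b) * RInt (PP c l1 l2 m1 m2 a b (i,j)) 0 B
  + flow c l1 l2 m1 m2 (fun x => RInt (QQ c l1 l2 m1 m2 a b x) 0 B) i j.
Proof.
  intros H1 H2 H3 H4.
  assert (HP : forall x, ex_RInt (PP c l1 l2 m1 m2 a b x) 0 B)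
    by (intros; apply (ex_RInt_continuous (V:=R_CompleteNormedModule)); intros; apply PP_cont; auto).
  assert (HQ : forall x, ex_RInt (QQ c l1 l2 m1 m2 a b x) 0 B)
    by (intros; apply (ex_RInt_continuous (V:=R_CompleteNormedModule)); intros; apply QQ_cont; auto).
  assert (HF : ex_RInt (fun s => flow c l1 l2 m1 m2 (fun x => QQ c l1 l2 m1 m2 a b x s) i j) 0 B).
  { apply (ex_RInt_continuous (V:=R_CompleteNormedModule)); intros.
    apply (flow_cont c l1 l2 m1 m2 (QQ c l1 l2 m1 m2 a b)). intros; apply QQ_cont; auto. }
  assert (HD : forall x, Rmin 0 B <= x <= Rmax 0 B -> is_derive (QQ c l1 l2 m1 m2 a b (i,j)) x
     (- a * QQ c l1 l2 m1 m2 a b (i,j) x + (- b) * PP c l1 l2 m1 m2 a b (i,j) x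
    + flow c l1 l2 m1 m2 (fun y => QQ c l1 l2 m1 m2 a b y x) i j)).
  { intros. eapply is_derive_ext; [intros; reflexivity|].
    replace (- a * QQ c l1 l2 m1 m2 a b (i,j) x + (- b) * PP c l1 l2 m1 m2 a b (i,j) x)
     with (-a * QQ c l1 l2 m1 m2 a b (i,j) x - b * PP c l1 l2 m1 m2 a b (i,j) x) by ring.
    apply QQ_deriv; auto. }
  assert (HC : forall x, Rmin 0 B <= x <= Rmax 0 B -> continuous (fun t => - a * QQ c l1 l2 m1 m2 a b (i,j) t + (- b) * PP c l1 l2 m1 m2 a b (i,j) t
    + flow c l1 l2 m1 m2 (fun y => QQ c l1 l2 m1 m2 a b y t) i j) x).
  { intros; apply cont3; try apply PP_cont; try apply QQ_cont; auto.
    apply (flow_cont c l1 l2 m1 m2 (QQ c l1 l2 m1 m2 a b)). intros; apply QQ_cont; auto. }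
  pose proof (is_RInt_derive (V:=R_CompleteNormedModule) _ _ 0 B HD HC) as H.
  apply (is_RInt_unique (V:=R_CompleteNormedModule)) in H.
  rewrite RInt3 in H; auto.
  rewrite (RInt_flow c l1 l2 m1 m2 (QQ c l1 l2 m1 m2 a b)) in H; auto.

Qed.


Lemma limPQ c l1 l2 m1 m2 alpha x v : is_laplace_pi c l1 l2 m1 m2 alpha x v ->
  is_lim_seq (fun n => RInt (PP c l1 l2 m1 m2 (fst alpha) (snd alpha) x) 0 (INR n)) (fst v) /\
  is_lim_seq (fun n => RInt (QQ c l1 l2 m1 m2 (fst alpha) (snd alpha) x) 0 (INR n)) (snd v).
Proof.
  intros H. destruct (gen_lim _ _ H) as [Hf Hs]. split.
  - eapply is_lim_seq_ext; [|exact Hf]. intros n. apply RInt_ext. intros t _. exact (integ_fst alpha t (ptrans c l1 l2 m1 m2 x t)).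
  - eapply is_lim_seq_ext; [|exact Hs]. intros n. apply RInt_ext. intros t _. exact (integ_snd alpha t (ptrans c l1 l2 m1 m2 x t)).
Qed.

Lemma bnd_lim0 (u : R -> R) a : 0 < a -> (forall t, 0 <= t -> Rabs (u t) <= exp (- (a * t))) ->
  is_lim_seq (fun n => u (INR n)) 0.
Proof.
  intros Ha H.
  apply is_lim_seq_le_le with (fun n => - exp (- (a * INR n))) (fun n => exp (- (a * INR n))).
  - intros n. pose proof (H (INR n) (pos_INR n)). apply Rabs_le_between in H0. lra.
  - assert (L := proj1 (is_lim_seq_opp _ _) (exp_lim a Ha)). simpl in L. rewrite Ropp_0 in L. exact L.
  - apply exp_lim; auto.
Qed.

Lemma PP_bnd c l1 l2 m1 m2 a b x t : 0 < l1 -> 0 < l2 -> 0 < m1 -> 0 < m2 -> 0 <= t ->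
  Rabs (PP c l1 l2 m1 m2 a b x t) <= exp (- (a * t)).
Proof.
  intros. unfold PP. rewrite Rabs_mult. pose proof (pt_bounds c l1 l2 m1 m2 x t H H0 H1 H2 H3).
  rewrite (Rabs_pos_eq (ptrans _ _ _ _ _ _ _)) by lra.
  pose proof (Ec_bnd a b t). pose proof (Rabs_pos (Ec a b t)).
  rewrite <- (Rmult_1_r (exp _)). apply Rmult_le_compat; lra.
Qed.
Lemma QQ_bnd c l1 l2 m1 m2 a b x t : 0 < l1 -> 0 < l2 -> 0 < m1 -> 0 < m2 -> 0 <= t ->
  Rabs (QQ c l1 l2 m1 m2 a b x t) <= exp (- (a * t)).
Proof.
  intros. unfold QQ. rewrite Rabs_mult. pose proof (pt_bounds c l1 l2 m1 m2 x t H H0 H1 H2 H3).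
  rewrite (Rabs_pos_eq (ptrans _ _ _ _ _ _ _)) by lra.
  pose proof (Es_bnd a b t). pose proof (Rabs_pos (Es a b t)).
  rewrite <- (Rmult_1_r (exp _)). apply Rmult_le_compat; lra.
Qed.

Lemma int_bnd (u : R -> R) a B : 0 < a -> 0 <= B -> (forall t, continuous u t) ->
  (forall t, 0 <= t -> Rabs (u t) <= exp (- (a * t))) -> Rabs (RInt u 0 B) <= / a.
Proof.
  intros Ha HB Hc H.
  assert (He : ex_RInt (fun t => exp (- (a * t))) 0 B).
  { apply (ex_RInt_continuous (V:=R_CompleteNormedModule)). intros.
    apply (ex_derive_continuous (K:=R_AbsRing) (V:=R_NormedModule)). auto_derive; auto. }
  assert (Hu : ex_RInt u 0 B) by (apply (ex_RInt_continuous (V:=R_CompleteNormedModule)); auto).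
  pose proof (exp_int a B Ha HB).
  assert (H1 : RInt u 0 B <= RInt (fun t => exp (- (a * t))) 0 B).
  { apply RInt_le; auto. intros t Ht. pose proof (H t ltac:(lra)). apply Rabs_le_between in H1. lra. }
  assert (H2 : RInt (fun t => - exp (- (a * t))) 0 B <= RInt u 0 B).
  { apply RInt_le; auto.
    - apply (ex_RInt_opp (V:=R_NormedModule)) in He. exact He.
    - intros t Ht. pose proof (H t ltac:(lra)). apply Rabs_le_between in H2. lra. }
  assert (E : RInt (fun t => - exp (- (a * t))) 0 B = - RInt (fun t => exp (- (a * t))) 0 B).
  { apply (RInt_opp (V:=R_CompleteNormedModule)); auto. }
  rewrite E in H2. apply Rabs_le. lra.
Qed.

Lemma lim_uniq (u : nat -> R) (l1 l2 : R) : is_lim_seq u l1 -> is_lim_seq u l2 -> l1 = l2.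
Proof. intros H1 H2. apply is_lim_seq_unique in H1. apply is_lim_seq_unique in H2.
  rewrite H1 in H2. injection H2; auto. Qed.

Lemma lim3 (u v w : nat -> R) k1 k2 (lu lv lw : R) : is_lim_seq u lu -> is_lim_seq v lv -> is_lim_seq w lw ->
  is_lim_seq (fun n => k1 * u n + k2 * v n + w n) (k1 * lu + k2 * lv + lw).
Proof.
  intros Hu Hv Hw. apply is_lim_seq_plus'; auto. apply is_lim_seq_plus'.
  - apply (is_lim_seq_scal_l u k1 lu) in Hu. exact Hu.
  - apply (is_lim_seq_scal_l v k2 lv) in Hv. exact Hv.
Qed.

Lemma lap_eqs c l1 l2 m1 m2 (alpha : C) (pi : state -> C) i j :
  0 < l1 -> 0 < l2 -> 0 < m1 -> 0 < m2 -> 0 < fst alpha ->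
  (forall x, is_laplace_pi c l1 l2 m1 m2 alpha x (pi x)) ->
  0 - dst c l1 l2 m1 m2 0 (i,j) = - fst alpha * fst (pi (i,j)) + snd alpha * snd (pi (i,j))
      + flow c l1 l2 m1 m2 (fun x => fst (pi x)) i j /\
  0 - 0 = - fst alpha * snd (pi (i,j)) + (- snd alpha) * fst (pi (i,j))
      + flow c l1 l2 m1 m2 (fun x => snd (pi x)) i j.
Proof.
  intros H1 H2 H3 H4 Ha Hpi.
  set (a := fst alpha). set (b := snd alpha).
  assert (HP : forall x, is_lim_seq (fun n => RInt (PP c l1 l2 m1 m2 a b x) 0 (INR n)) (fst (pi x)))
    by (intros; apply (limPQ c l1 l2 m1 m2 alpha x (pi x) (Hpi x))).
  assert (HQ : forall x, is_lim_seq (fun n => RInt (QQ c l1 l2 m1 m2 a b x) 0 (INR n)) (snd (pi x)))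
    by (intros; apply (limPQ c l1 l2 m1 m2 alpha x (pi x) (Hpi x))).
  split.
  - apply (lim_uniq (fun n => PP c l1 l2 m1 m2 a b (i,j) (INR n) - PP c l1 l2 m1 m2 a b (i,j) 0)).
    + apply is_lim_seq_minus'.
      * apply (bnd_lim0 _ a); auto. intros; apply PP_bnd; auto.
      * unfold PP. rewrite Ec_0, pt_0, Rmult_1_l. apply is_lim_seq_const.
    + eapply is_lim_seq_ext; [intros n; symmetry; apply FTC_P; auto|].
      apply lim3; auto. apply lim_flow. auto.
  - apply (lim_uniq (fun n => QQ c l1 l2 m1 m2 a b (i,j) (INR n) - QQ c l1 l2 m1 m2 a b (i,j) 0)).
    + apply is_lim_seq_minus'.
      * apply (bnd_lim0 _ a); auto. intros; apply QQ_bnd; auto.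
      * unfold QQ. rewrite Es_0, Rmult_0_l. apply is_lim_seq_const.
    + eapply is_lim_seq_ext; [intros n; symmetry; apply FTC_Q; auto|].
      apply lim3; auto. apply lim_flow. auto.
Qed.

Lemma pi_bnd c l1 l2 m1 m2 (alpha : C) (pi : state -> C) y :
  0 < l1 -> 0 < l2 -> 0 < m1 -> 0 < m2 -> 0 < fst alpha ->
  (forall x, is_laplace_pi c l1 l2 m1 m2 alpha x (pi x)) ->
  Rabs (fst (pi y)) <= / fst alpha /\ Rabs (snd (pi y)) <= / fst alpha.
Proof.
  intros H1 H2 H3 H4 Ha Hpi.
  destruct (limPQ c l1 l2 m1 m2 alpha y (pi y) (Hpi y)) as [HP HQ].
  split.
  - apply is_lim_seq_abs in HP.
    assert (Hl := is_lim_seq_le _ _ _ _ (fun n => int_bnd (PP c l1 l2 m1 m2 (fst alpha) (snd alpha) y) (fst alpha) (INR n) Ha (pos_INR n)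
        (fun t => PP_cont c l1 l2 m1 m2 _ _ y t H1 H2 H3 H4)
        (fun t ht => PP_bnd c l1 l2 m1 m2 _ _ y t H1 H2 H3 H4 ht)) HP (is_lim_seq_const _)).
    simpl in Hl. exact Hl.
  - apply is_lim_seq_abs in HQ.
    assert (Hl := is_lim_seq_le _ _ _ _ (fun n => int_bnd (QQ c l1 l2 m1 m2 (fst alpha) (snd alpha) y) (fst alpha) (INR n) Ha (pos_INR n)
        (fun t => QQ_cont c l1 l2 m1 m2 _ _ y t H1 H2 H3 H4)
        (fun t ht => QQ_bnd c l1 l2 m1 m2 _ _ y t H1 H2 H3 H4 ht)) HQ (is_lim_seq_const _)).
    simpl in Hl. exact Hl.
Qed.

Lemma C_ext (z1 z2 : C) : fst z1 = fst z2 -> snd z1 = snd z2 -> z1 = z2.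
Proof. destruct z1, z2; simpl; intros; subst; auto. Qed.

Lemma rec_J c l1 l2 m1 m2 (alpha : C) (pi : state -> C) i J :
  0 < l1 -> 0 < l2 -> 0 < m1 -> 0 < m2 -> 0 < fst alpha ->
  (forall x, is_laplace_pi c l1 l2 m1 m2 alpha x (pi x)) ->
  (1 <= c)%nat -> (c <= J)%nat ->
  Cmult (Cplus alpha (RtoC (l1 + l2 + INR c * m2))) (pi (i,J)) =
  Cplus (Cplus (Cmult (RtoC (INR c * m2)) (pi (i,S J))) (Cmult (RtoC l2) (pi (i, pred J))))
        (match i with O => RtoC 0 | S i' => Cmult (RtoC l1) (pi (i',J)) end).
Proof.
  intros H1 H2 H3 H4 Ha Hpi Hc HJ.
  destruct (lap_eqs c l1 l2 m1 m2 alpha pi i J H1 H2 H3 H4 Ha Hpi) as [E1' E2'].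
  destruct J as [|J]; [lia|].
  assert (Hd : dst c l1 l2 m1 m2 0 (i, S J) = 0) by (simpl; destruct i; reflexivity).
  rewrite Hd in E1'.
  unfold flow in E1', E2'.
  assert (D1a : D1 c m1 i (S J) = 0) by (unfold D1; replace (c - S J)%nat with 0%nat by lia; rewrite Nat.min_0_r; simpl; ring).
  assert (D1b : D1 c m1 (S i) (S J) = 0) by (unfold D1; replace (c - S J)%nat with 0%nat by lia; rewrite Nat.min_0_r; simpl; ring).
  assert (D2a : D2 c m2 (S J) = INR c * m2) by (unfold D2; rewrite Nat.min_l by lia; reflexivity).
  assert (D2b : D2 c m2 (S (S J)) = INR c * m2) by (unfold D2; rewrite Nat.min_l by lia; reflexivity).
  rewrite D1a, D1b, D2a, D2b in E1', E2'. simpl pred. simpl predf in E1', E2'.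
  destruct alpha as [a b]. simpl in Ha, E1', E2'.
  destruct i as [|i]; simpl predf in E1', E2'; apply C_ext; simpl; lra.
Qed.

Lemma pi_Cmod c l1 l2 m1 m2 (alpha : C) (pi : state -> C) y :
  0 < l1 -> 0 < l2 -> 0 < m1 -> 0 < m2 -> 0 < fst alpha ->
  (forall x, is_laplace_pi c l1 l2 m1 m2 alpha x (pi x)) ->
  Cmod (pi y) <= 2 / fst alpha.
Proof.
  intros H1 H2 H3 H4 Ha Hpi.
  destruct (pi_bnd c l1 l2 m1 m2 alpha pi y H1 H2 H3 H4 Ha Hpi) as [B1 B2].
  eapply Rle_trans; [apply Cmod_2Rmax|].
  assert (Hm : Rmax (Rabs (fst (pi y))) (Rabs (snd (pi y))) <= / fst alpha) by (apply Rmax_lub; auto).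
  assert (Hs : sqrt 2 <= 2).
  { pose proof (sqrt_sqrt 2 ltac:(lra)). pose proof (sqrt_pos 2). nra. }
  pose proof (sqrt_pos 2). pose proof (Rmax_l (Rabs (fst (pi y))) (Rabs (snd (pi y)))).
  pose proof (Rabs_pos (fst (pi y))).
  unfold Rdiv. apply Rmult_le_compat; lra.
Qed.



Lemma Cmod_sq (z : C) : Cmod z * Cmod z = fst z * fst z + snd z * snd z.
Proof. unfold Cmod. rewrite sqrt_sqrt; [ring|]. nra. Qed.

Lemma Cmod_ge_fst (z : C) : Rabs (fst z) <= Cmod z.
Proof. apply re_le_Cmod. Qed.

Lemma Csqrt_sq (z : C) : Cmult (Csqrt z) (Csqrt z) = z.
Proof.
  destruct z as [x y]. unfold Csqrt. simpl fst; simpl snd.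
  set (r := Cmod (x,y)).
  assert (Hr : r * r = x * x + y * y) by apply (Cmod_sq (x,y)).
  assert (Hr0 : 0 <= r) by apply Cmod_ge_0.
  assert (Hx : Rabs x <= r) by apply (Cmod_ge_fst (x,y)).
  apply Rabs_le_between in Hx.
  assert (HA : sqrt ((r + x) / 2) * sqrt ((r + x) / 2) = (r + x) / 2) by (apply sqrt_sqrt; lra).
  assert (HB : sqrt ((r - x) / 2) * sqrt ((r - x) / 2) = (r - x) / 2) by (apply sqrt_sqrt; lra).
  assert (HAB : sqrt ((r + x) / 2) * sqrt ((r - x) / 2) = Rabs y / 2).
  { rewrite <- sqrt_mult by lra.
    replace ((r + x) / 2 * ((r - x) / 2)) with ((Rabs y / 2) * (Rabs y / 2)).
    - apply sqrt_square. pose proof (Rabs_pos y); lra.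
    - replace (Rabs y / 2 * (Rabs y / 2)) with ((Rabs y * Rabs y) / 4) by field.
      rewrite <- Rabs_mult, Rabs_pos_eq by nra. nra. }
  destruct (Rlt_dec y 0) as [Hy|Hy]; unfold Cmult; simpl; apply C_ext; simpl.
  - lra.
  - rewrite Rabs_left in HAB by lra. nra.
  - lra.
  - rewrite Rabs_pos_eq in HAB by lra. nra.
Qed.

Lemma Csqrt_fst (z : C) : fst (Csqrt z) = sqrt ((Cmod z + fst z) / 2).
Proof. reflexivity. Qed.

Lemma RtoC_nz (x : R) : x <> 0 -> RtoC x <> RtoC 0.
Proof. intros H E. injection E. auto. Qed.

Lemma sigma_re (lam mu : R) (s : C) : 0 < lam -> 0 < mu -> 0 < fst s ->
  let w := Cplus (RtoC (lam + mu)) s in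
  Rabs (lam - mu) <= fst (Csqrt (Cminus (Cmult w w) (RtoC (4 * lam * mu)))).
Proof.
  intros Hl Hm Hs w.
  set (Z := Cminus (Cmult w w) (RtoC (4 * lam * mu))).
  rewrite Csqrt_fst.
  set (p := fst w). set (q := snd w).
  assert (Hp : p = lam + mu + fst s) by (unfold p, w; simpl; ring).
  assert (HZ1 : fst Z = p * p - q * q - 4 * lam * mu) by (unfold Z, p, q; simpl; ring).
  assert (HZ2 : snd Z = 2 * p * q) by (unfold Z, p, q; simpl; ring).
  set (D := (lam - mu) * (lam - mu)).
  assert (HC : Cmod Z * Cmod Z = fst Z * fst Z + snd Z * snd Z) by apply Cmod_sq.
  assert (HC0 : 0 <= Cmod Z) by apply Cmod_ge_0.
  assert (Hp2 : lam + mu <= p) by lra.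
  assert (Hpp : (lam + mu) * (lam + mu) <= p * p) by (apply Rmult_le_compat; lra).
  assert (HD : D <= (lam + mu) * (lam + mu)) by (unfold D; nra).
  assert (Hq2 : 0 <= q * q) by (pose proof (Rle_0_sqr q); unfold Rsqr in *; lra).
  assert (HD0 : 0 <= D) by (pose proof (Rle_0_sqr (lam - mu)); unfold Rsqr in *; unfold D; lra).
  assert (K1 : 0 <= q * q * (p * p - D)) by (apply Rmult_le_pos; lra).
  assert (K2 : 0 <= D * (p * p - (lam + mu) * (lam + mu))) by (apply Rmult_le_pos; lra).
  assert (Hmain : 2 * D - fst Z <= Cmod Z).
  { destruct (Rle_dec (2 * D - fst Z) 0) as [Hn|Hn]; [lra|].
    assert (E : Cmod Z * Cmod Z - (2 * D - fst Z) * (2 * D - fst Z) =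
      4 * (q * q * (p * p - D)) + 4 * (D * (p * p - (lam + mu) * (lam + mu)))).
    { rewrite HC, HZ1, HZ2. unfold D. ring. }
    assert ((2 * D - fst Z) * (2 * D - fst Z) <= Cmod Z * Cmod Z) by lra.
    nra. }
  rewrite <- sqrt_Rsqr_abs. apply sqrt_le_1_alt. unfold Rsqr. fold D. lra.
Qed.

Lemma phi_facts (lam mu : R) (s : C) : 0 < lam -> 0 < mu -> 0 < fst s ->
  let w := Cplus (RtoC (lam + mu)) s in
  let ph := phiB lam mu s in
  Cplus (Cminus (Cmult (RtoC lam) (Cmult ph ph)) (Cmult w ph)) (RtoC mu) = RtoC 0 /\
  Cmod ph < 1 /\ Cmod (Cmult (RtoC (lam / mu)) ph) < 1.
Proof.
  intros Hl Hm Hs w ph.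
  set (Z := Cminus (Cmult w w) (RtoC (4 * lam * mu))).
  set (sg := Csqrt Z).
  assert (Hsq : Cmult sg sg = Z) by apply Csqrt_sq.
  assert (Hre : Rabs (lam - mu) <= fst sg) by apply (sigma_re lam mu s Hl Hm Hs).
  assert (Hph : ph = Cdiv (Cminus w sg) (RtoC (2 * lam))) by reflexivity.
  assert (H2l : RtoC (2 * lam) <> RtoC 0) by (apply RtoC_nz; lra).
  assert (Hprod : Cmult (Cminus w sg) (Cplus w sg) = RtoC (4 * lam * mu)).
  { transitivity (Cminus (Cmult w w) (Cmult sg sg)); [ring|]. rewrite Hsq. unfold Z. ring. }
  assert (Hw : fst w = lam + mu + fst s) by (unfold w; simpl; ring).
  assert (Hbig : lam + mu + Rabs (lam - mu) < Cmod (Cplus w sg)).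
  { eapply Rlt_le_trans; [| apply Rle_trans with (Rabs (fst (Cplus w sg))); [apply Rle_abs| apply Cmod_ge_fst]].
    change (fst (Cplus w sg)) with (fst w + fst sg). lra. }
  assert (Hm1 : Cmod (Cminus w sg) * Cmod (Cplus w sg) = 4 * lam * mu).
  { rewrite <- Cmod_mult, Hprod, Cmod_R. apply Rabs_pos_eq. nra. }
  assert (Hmax1 : 2 * mu <= lam + mu + Rabs (lam - mu)) by (destruct (Rle_dec lam mu); [rewrite Rabs_left1 by lra| rewrite Rabs_pos_eq by lra]; lra).
  assert (Hmax2 : 2 * lam <= lam + mu + Rabs (lam - mu)) by (destruct (Rle_dec lam mu); [rewrite Rabs_left1 by lra| rewrite Rabs_pos_eq by lra]; lra).
  assert (Hc0 : 0 <= Cmod (Cminus w sg)) by apply Cmod_ge_0.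
  assert (Hmodph : Cmod ph = Cmod (Cminus w sg) / (2 * lam)).
  { rewrite Hph, Cmod_div by auto. rewrite Cmod_R, Rabs_pos_eq by lra. reflexivity. }
  split; [|split].
  - rewrite Hph. 
    transitivity (Cdiv (Cminus (Cmult sg sg) Z) (RtoC (4 * lam))).
    + unfold Z.
      replace (4 * lam * mu) with ((lam + lam) * (mu + mu)) by ring.
      replace (4 * lam) with ((lam + lam) + (lam + lam)) by ring.
      replace (2 * lam) with (lam + lam) by ring.
      assert (N1 : Cplus (RtoC lam) (RtoC lam) <> RtoC 0) by (rewrite <- RtoC_plus; apply RtoC_nz; lra).
      assert (N2 : Cplus (Cplus (RtoC lam) (RtoC lam)) (Cplus (RtoC lam) (RtoC lam)) <> RtoC 0)
        by (rewrite <- !RtoC_plus; apply RtoC_nz; lra).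
      rewrite !RtoC_mult, !RtoC_plus. field. auto.
    + rewrite Hsq. unfold Cminus. rewrite Cplus_opp_r. unfold Cdiv. apply Cmult_0_l.
  - rewrite Hmodph. apply (Rmult_lt_reg_r (2 * lam)); [lra|]. unfold Rdiv.
    rewrite Rmult_assoc, Rinv_l, Rmult_1_r by lra. nra.
  - rewrite Cmod_mult, Cmod_R, Hmodph, Rabs_pos_eq by (unfold Rdiv; apply Rmult_le_pos; [lra| left; apply Rinv_0_lt_compat; lra]).
    replace (lam / mu * (Cmod (Cminus w sg) / (2 * lam))) with (Cmod (Cminus w sg) / (2 * mu)) by (field; lra).
    apply (Rmult_lt_reg_r (2 * mu)); [lra|]. unfold Rdiv.
    rewrite Rmult_assoc, Rinv_l, Rmult_1_r by lra. nra.
Qed.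

Lemma fold_plus (f g : nat -> C) l :
  fold_right Cplus (RtoC 0) (map (fun k => Cplus (f k) (g k)) l) =
  Cplus (fold_right Cplus (RtoC 0) (map f l)) (fold_right Cplus (RtoC 0) (map g l)).
Proof. induction l; simpl; [ring| rewrite IHl; ring]. Qed.

Lemma fold_scal (f : nat -> C) (c0 : C) l :
  fold_right Cplus (RtoC 0) (map (fun k => Cmult c0 (f k)) l) =
  Cmult c0 (fold_right Cplus (RtoC 0) (map f l)).
Proof. induction l; simpl; [ring| rewrite IHl; ring]. Qed.

Lemma fold_ext (f g : nat -> C) l : (forall k, In k l -> f k = g k) ->
  fold_right Cplus (RtoC 0) (map f l) = fold_right Cplus (RtoC 0) (map g l).
Proof. induction l; simpl; intros H; auto. rewrite H, IHl; auto. Qed.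

Lemma Csum_plus (f g : nat -> C) a b :
  Csum (fun k => Cplus (f k) (g k)) a b = Cplus (Csum f a b) (Csum g a b).
Proof. apply fold_plus. Qed.
Lemma Csum_scal (f : nat -> C) c0 a b :
  Csum (fun k => Cmult c0 (f k)) a b = Cmult c0 (Csum f a b).
Proof. apply fold_scal. Qed.
Lemma Csum_ext (f g : nat -> C) a b : (forall k, (a <= k <= b)%nat -> f k = g k) ->
  Csum f a b = Csum g a b.
Proof. intros H. apply fold_ext. intros k Hk. apply in_seq in Hk. apply H. lia. Qed.
Lemma Csum_nil (f : nat -> C) a b : (b < a)%nat -> Csum f a b = RtoC 0.
Proof. intros H. unfold Csum. replace (S b - a)%nat with 0%nat by lia. reflexivity. Qed.
Lemma Csum_cons (f : nat -> C) a b : (a <= b)%nat -> Csum f a b = Cplus (f a) (Csum f (S a) b).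
Proof. intros H. unfold Csum. replace (S b - a)%nat with (S (S b - S a)) by lia. reflexivity. Qed.
Lemma Csum_last (f : nat -> C) a b : (a <= S b)%nat -> Csum f a (S b) = Cplus (Csum f a b) (f (S b)).
Proof.
  remember (S b - a)%nat as n. revert a Heqn. induction n; intros a Hn Hab.
  - assert (a = S b) by lia. subst a. rewrite Csum_cons by lia. rewrite !Csum_nil by lia. ring.
  - rewrite (Csum_cons f a (S b)) by lia. rewrite (Csum_cons f a b) by lia.
    destruct (Nat.eq_dec a b) as [->|Hne].
    + rewrite (Csum_cons f (S b) (S b)) by lia. rewrite !Csum_nil by lia. ring.
    + rewrite IHn by lia. ring.
Qed.
Lemma Csum_shift (f : nat -> C) a b : Csum f (S a) (S b) = Csum (fun k => f (S k)) a b.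
Proof. unfold Csum. replace (S (S b) - S a)%nat with (S b - a)%nat by lia.
  rewrite <- seq_shift, map_map. reflexivity. Qed.
Lemma Csum_zero (f : nat -> C) a b : (forall k, f k = RtoC 0) -> Csum f a b = RtoC 0.
Proof. intros H. unfold Csum. induction (seq a (S b - a)); simpl; auto. rewrite H, IHl. ring. Qed.
Lemma Csum_0first (f : nat -> C) b : Csum f 0 (S b) = Cplus (f 0%nat) (Csum (fun k => f (S k)) 0 b).
Proof. rewrite Csum_cons by lia. rewrite Csum_shift. reflexivity. Qed.

Fixpoint bb (j : nat) : nat -> R :=
  match j with
  | O => fun k => match k with O => 1 | S _ => 0 end
  | S j' => fix g (k : nat) : R := match k with O => 1 | S k' => bb j' (S k') + g k' end
  end.

Lemma bb_SS j k : bb (S j) (S k) = bb j (S k) + bb (S j) k.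
Proof. reflexivity. Qed.
Lemma bb_0r j : bb j 0 = 1.
Proof. destruct j; reflexivity. Qed.
Lemma bb_0S k : bb 0 (S k) = 0.
Proof. reflexivity. Qed.

Lemma binC_0 n : Binomial.C n 0 = 1.
Proof. unfold Binomial.C. rewrite Nat.sub_0_r. simpl.
  assert (INR (fact n) <> 0) by apply (not_0_INR _ (fact_neq_0 n)). field; auto. Qed.
Lemma binC_n n : Binomial.C n n = 1.
Proof. unfold Binomial.C. rewrite Nat.sub_diag. simpl.
  assert (INR (fact n) <> 0) by apply (not_0_INR _ (fact_neq_0 n)). field; auto. Qed.

Lemma bb_binom j k : Binomial.C (j + k) k = bb (S j) k.
Proof.
  revert k; induction j as [|j IHj]; intros k.
  - rewrite Nat.add_0_l, binC_n. induction k; [reflexivity|]. rewrite bb_SS, bb_0S, <- IHk. ring.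
  - induction k as [|k IHk].
    + rewrite Nat.add_0_r, binC_0. reflexivity.
    + rewrite bb_SS, <- IHk, <- IHj.
      replace (S j + S k)%nat with (S (S j + k)) by lia.
      rewrite <- pascal by lia. replace (j + S k)%nat with (S j + k)%nat by lia. ring.
Qed.

Lemma bb_nonneg j k : 0 <= bb j k.
Proof.
  revert k; induction j; intros k.
  - destruct k; simpl; lra.
  - induction k; [rewrite bb_0r; lra|]. rewrite bb_SS. specialize (IHj (S k)). lra.
Qed.

Lemma bb_hockey j k : RtoC (bb (S j) k) = Csum (fun m => RtoC (bb j m)) 0 k.
Proof.
  induction k.
  - rewrite Csum_cons, Csum_nil by lia. rewrite !bb_0r, <- RtoC_plus. f_equal; ring.
  - rewrite Csum_last by lia. rewrite <- IHk, bb_SS, RtoC_plus. ring.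
Qed.

Lemma pow_le1 (q : R) j : 0 <= q <= 1 -> q ^ j <= 1.
Proof. intros H; induction j; simpl; [lra|]. pose proof (pow_le q j). nra. Qed.

Lemma bb_bound (q : R) k : 0 <= q < 1 -> exists M, forall j, bb j k * q ^ j <= M.
Proof.
  intros Hq. induction k as [|k [M HM]].
  - exists 1. intros j. rewrite bb_0r, Rmult_1_l. apply pow_le1; lra.
  - assert (HM0 : 0 <= M) by (specialize (HM 0%nat); pose proof (bb_nonneg 0 k); rewrite pow_O in HM; lra).
    exists (M / (1 - q)). intros j. induction j.
    + simpl. rewrite Rmult_0_l. apply Rmult_le_pos; [lra| left; apply Rinv_0_lt_compat; lra].
    + rewrite bb_SS. simpl pow.
      specialize (HM (S j)). simpl pow in HM.
      assert (E : (bb j (S k) + bb (S j) k) * (q * q ^ j) = q * (bb j (S k) * q ^ j) + bb (S j) k * (q * q ^ j)) by ring.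
      rewrite E.
      assert (q * (bb j (S k) * q ^ j) <= q * (M / (1 - q))) by (apply Rmult_le_compat_l; lra).
      assert (E2 : q * (M / (1 - q)) + M = M / (1 - q)) by (field; lra).
      lra.
Qed.

Lemma Ceq_from_minus (x y : C) : Cminus x y = RtoC 0 -> x = y.
Proof. intros H. apply Ceq_minus in H. exact H. Qed.

Lemma exch (X y : nat -> C) n :
  Csum (fun k => Cmult (X k) (Csum y 0 k)) 0 n = Csum (fun m => Cmult (y m) (Csum X m n)) 0 n.
Proof.
  induction n.
  - unfold Csum; simpl; ring.
  - rewrite Csum_last by lia. rewrite IHn.
    rewrite (Csum_last (fun m => Cmult (y m) (Csum X m (S n)))) by lia.
    rewrite (Csum_ext (fun m => Cmult (y m) (Csum X m (S n))) (fun m => Cplus (Cmult (y m) (Csum X m n)) (Cmult (X (S n)) (y m)))).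
    2:{ intros k Hk. rewrite Csum_last by lia. ring. }
    rewrite Csum_plus, Csum_scal. rewrite (Csum_last y 0 n) by lia.
    rewrite (Csum_cons X (S n) (S n)), (Csum_nil X (S (S n)) (S n)) by lia. ring.
Qed.

Lemma tele (u : nat -> C) (a R2 : C) i' m : a = Cminus (RtoC 1) R2 -> (m <= S i')%nat ->
  Csum (fun k => Cmult (Cpow a (S k)) (Cplus (u k) (Cmult R2 (Csum u (S k) i')))) m i' =
  Cmult (Cpow a (S m)) (Csum u m i').
Proof.
  intros Ha. remember (S i' - m)%nat as d. revert m Heqd. induction d; intros m Hd Hm.
  - assert (m = S i') by lia. subst m. rewrite !Csum_nil by lia. ring.
  - rewrite Csum_cons by lia. rewrite IHd by lia.
    rewrite (Csum_cons u m i') by lia. simpl Cpow. rewrite Ha. ring.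
Qed.

Lemma vseq_SS c R1 R2 pi i m :
  vseq c R1 R2 pi (S i) (S m) = Cmult R1 (Cplus (vseq c R1 R2 pi i m) (Cmult R2 (Csum (vseq c R1 R2 pi i) (S m) i))).
Proof. reflexivity. Qed.

Lemma coefC c pi (lam mu w r phi R1 R2 l1 : C) i' m :
  Cmult mu r = Cmult lam phi -> R2 = Cmult r phi ->
  Cmult (Cmult (Cmult lam R1) (Cminus (RtoC 1) R2)) (Cminus (RtoC 1) R2) = Cmult l1 r ->
  (m <= i')%nat ->
  Cminus (Cmult (Cmult (Cmult mu r) r) (Csum (fun k => Cmult (vseq c R1 R2 pi (S i') (S k)) (Cpow (Cminus (RtoC 1) R2) (S k))) m i'))
         (Cmult lam (Cmult (vseq c R1 R2 pi (S i') (S m)) (Cpow (Cminus (RtoC 1) R2) (S m))))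
  = Copp (Cmult (Cmult (Cmult l1 r) (Cpow (Cminus (RtoC 1) R2) m)) (vseq c R1 R2 pi i' m)).
Proof.
  intros H1 H2 H3 Hm.
  set (a := Cminus (RtoC 1) R2) in *.
  set (u := vseq c R1 R2 pi i').
  rewrite (Csum_ext _ (fun k => Cmult R1 (Cmult (Cpow a (S k)) (Cplus (u k) (Cmult R2 (Csum u (S k) i')))))).
  2:{ intros k _. rewrite vseq_SS. fold u. ring. }
  rewrite Csum_scal, (tele u a R2 i' m) by (auto; lia).
  rewrite vseq_SS. fold u.
  rewrite (Csum_cons u m i') by lia.
  set (S' := Csum u (S m) i').
  assert (E1 : Cminus (Cmult (Cmult mu r) r) (Cmult lam R2) = RtoC 0).
  { rewrite H2, H1. ring. }
  assert (E3 : Cminus (Cmult (Cmult (Cmult lam R1) a) a) (Cmult l1 r) = RtoC 0).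
  { rewrite H3. ring. }
  apply Ceq_from_minus.
  transitivity (Cminus (Cmult (Cmult (Cmult R1 (Cpow a (S m))) (Cplus (u m) S'))
                          (Cminus (Cmult (Cmult mu r) r) (Cmult lam R2)))
                       (Cmult (Cmult (Cpow a m) (u m)) (Cminus (Cmult (Cmult (Cmult lam R1) a) a) (Cmult l1 r)))).
  - simpl Cpow. unfold a. ring.
  - rewrite E1, E3. ring.
Qed.

Definition GG c R1 R2 pi (r : C) (i j : nat) : C :=
  Csum (fun k => Cmult (Cmult (Cmult (vseq c R1 R2 pi i k) (Cpow (Cminus (RtoC 1) R2) k)) (RtoC (bb j k))) (Cpow r j)) 0 i.

Lemma Csum_lin2 (f g : nat -> C) A B a b :
  Csum (fun k => Cplus (Cmult A (f k)) (Cmult B (g k))) a b = Cplus (Cmult A (Csum f a b)) (Cmult B (Csum g a b)).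
Proof. rewrite Csum_plus, !Csum_scal. reflexivity. Qed.

Lemma GG_0 c R1 R2 pi r i : GG c R1 R2 pi r i 0 = vseq c R1 R2 pi i 0.
Proof.
  unfold GG. destruct i.
  - unfold Csum. simpl. ring.
  - rewrite Csum_0first. rewrite Csum_zero.
    + simpl. ring.
    + intros k. simpl bb. ring.
Qed.

Lemma rec_G c pi (lam mu w r phi R1 R2 l1 : C) i j' :
  Cmult mu r = Cmult lam phi -> R2 = Cmult r phi ->
  Cmult (Cmult (Cmult lam R1) (Cminus (RtoC 1) R2)) (Cminus (RtoC 1) R2) = Cmult l1 r ->
  Cplus (Cminus (Cmult (Cmult mu r) r) (Cmult w r)) lam = RtoC 0 ->
  Cplus (Cminus (Cmult mu (GG c R1 R2 pi r i (S (S j')))) (Cmult w (GG c R1 R2 pi r i (S j'))))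
        (Cmult lam (GG c R1 R2 pi r i j')) =
  match i with O => RtoC 0 | S i' => Copp (Cmult l1 (GG c R1 R2 pi r i' (S j'))) end.
Proof.
  intros H1 H2 H3 Hq.
  set (a := Cminus (RtoC 1) R2) in *.
  set (X := fun k => Cmult (vseq c R1 R2 pi i k) (Cpow a k)).
  set (B := fun k => Cplus (Cminus (Cmult (Cmult (Cmult mu r) r) (RtoC (bb (S (S j')) k)))
                            (Cmult (Cmult w r) (RtoC (bb (S j') k)))) (Cmult lam (RtoC (bb j' k)))).
  assert (Step1 : Cplus (Cminus (Cmult mu (GG c R1 R2 pi r i (S (S j')))) (Cmult w (GG c R1 R2 pi r i (S j'))))
        (Cmult lam (GG c R1 R2 pi r i j')) = Csum (fun k => Cmult (Cmult (X k) (Cpow r j')) (B k)) 0 i).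
  { unfold GG. fold a.
    rewrite (Csum_ext (fun k => Cmult (Cmult (X k) (Cpow r j')) (B k))
      (fun k => Cplus (Cmult mu (Cmult (Cmult (Cmult (vseq c R1 R2 pi i k) (Cpow a k)) (RtoC (bb (S (S j')) k))) (Cpow r (S (S j')))))
         (Cmult (RtoC 1) (Cplus (Cmult (Copp w) (Cmult (Cmult (Cmult (vseq c R1 R2 pi i k) (Cpow a k)) (RtoC (bb (S j') k))) (Cpow r (S j'))))
                 (Cmult lam (Cmult (Cmult (Cmult (vseq c R1 R2 pi i k) (Cpow a k)) (RtoC (bb j' k))) (Cpow r j'))))))).
    2:{ intros k _. unfold X, B. simpl Cpow. ring. }
    rewrite Csum_lin2, Csum_lin2. ring. }
  rewrite Step1. clear Step1.
  assert (B0 : B 0%nat = RtoC 0).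
  { unfold B. rewrite !bb_0r. transitivity (Cplus (Cminus (Cmult (Cmult mu r) r) (Cmult w r)) lam); [ring|exact Hq]. }
  destruct i as [|i'].
  - unfold Csum. simpl. rewrite B0. ring.
  - rewrite Csum_0first. rewrite B0.
    set (u := vseq c R1 R2 pi i').
    set (y := fun m => RtoC (bb (S j') m)).
    assert (HwR : Cmult w r = Cplus (Cmult (Cmult mu r) r) lam).
    { apply Ceq_from_minus. transitivity (Copp (Cplus (Cminus (Cmult (Cmult mu r) r) (Cmult w r)) lam)); [ring|]. rewrite Hq. ring. }
    rewrite (Csum_ext _ (fun k => Cmult (Cpow r j') (Cplus (Cmult (Cmult (Cmult mu r) r) (Cmult (X (S k)) (Csum y 0 k)))
                                                        (Cmult (Copp lam) (Cmult (X (S k)) (y k)))))).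
    2:{ intros k _. unfold B. rewrite HwR.
        rewrite (bb_SS (S j') k), (bb_SS j' k), !RtoC_plus.
        replace (Csum y 0 k) with (RtoC (bb (S (S j')) k)) by (unfold y; rewrite bb_hockey; reflexivity).
        unfold y. ring. }
    rewrite Csum_scal, Csum_lin2, exch.
    assert (K : Csum (fun m => Cmult (y m) (Copp (Cmult (Cmult (Cmult l1 r) (Cpow a m)) (u m)))) 0 i' =
       Cplus (Cmult (Cmult (Cmult mu r) r) (Csum (fun m => Cmult (y m) (Csum (fun k => X (S k)) m i')) 0 i'))
             (Cmult (Copp lam) (Csum (fun k => Cmult (X (S k)) (y k)) 0 i'))).
    { rewrite <- Csum_lin2. apply Csum_ext. intros m Hm.
      pose proof (coefC c pi lam mu w r phi R1 R2 l1 i' m H1 H2 H3 ltac:(lia)) as HC.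
      fold a in HC. fold u in HC. rewrite <- HC.
      unfold X. ring. }
    rewrite <- K. clear K.
    unfold GG. fold a. fold u.
    set (Zs := Csum (fun m => Cmult (Cmult (u m) (Cpow a m)) (y m)) 0 i').
    rewrite (Csum_ext (fun m => Cmult (y m) (Copp (Cmult (Cmult (Cmult l1 r) (Cpow a m)) (u m))))
                      (fun m => Cmult (Copp (Cmult l1 r)) (Cmult (Cmult (u m) (Cpow a m)) (y m)))) by (intros; ring).
    rewrite (Csum_ext (fun k => Cmult (Cmult (Cmult (u k) (Cpow a k)) (RtoC (bb (S j') k))) (Cpow r (S j')))
                      (fun m => Cmult (Cpow r (S j')) (Cmult (Cmult (u m) (Cpow a m)) (y m)))) by (intros; unfold y; ring).
    rewrite !Csum_scal. fold Zs. simpl Cpow. ring.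
Qed.


Lemma Cmod_small_zero (x : C) (K q : R) : 0 <= q < 1 -> (forall n, Cmod x <= q ^ n * K) -> x = RtoC 0.
Proof.
  intros Hq H. apply Cmod_eq_0.
  assert (L : is_lim_seq (fun n => q ^ n * K) 0).
  { replace (Finite 0) with (Rbar_mult 0 K) by (simpl; f_equal; ring).
    apply is_lim_seq_scal_r. apply is_lim_seq_geom. rewrite Rabs_pos_eq; lra. }
  pose proof (is_lim_seq_le (fun _ => Cmod x) (fun n => q ^ n * K) (Cmod x) 0 H (is_lim_seq_const _) L) as Hle.
  simpl in Hle. pose proof (Cmod_ge_0 x). lra.
Qed.

Lemma uniq_rec (D : nat -> C) (phi r : C) (M : R) :
  Cmod phi < 1 ->
  (forall j, Cmult phi (Cminus (D (S (S j))) (Cmult r (D (S j)))) = Cminus (D (S j)) (Cmult r (D j))) ->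
  D 0%nat = RtoC 0 -> (forall j, Cmod (D j) <= M) -> forall j, D j = RtoC 0.
Proof.
  intros Hphi Hrec H0 HM.
  set (E := fun j => Cminus (D (S j)) (Cmult r (D j))).
  assert (HE : forall n k, E k = Cmult (Cpow phi n) (E (n + k)%nat)).
  { induction n; intros k; simpl.
    - ring.
    - rewrite IHn.
      assert (Hs : E (n + k)%nat = Cmult phi (E (S (n + k)))) by (unfold E; rewrite Hrec; reflexivity).
      rewrite Hs. ring. }
  assert (HEb : forall k, Cmod (E k) <= M + Cmod r * M).
  { intros k. unfold E. eapply Rle_trans; [apply Cmod_triangle|].
    rewrite Cmod_opp, Cmod_mult. pose proof (HM (S k)). pose proof (HM k). pose proof (Cmod_ge_0 r).
    apply Rplus_le_compat; auto. apply Rmult_le_compat_l; auto. }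
  assert (HE0 : forall k, E k = RtoC 0).
  { intros k. apply (Cmod_small_zero _ (M + Cmod r * M) (Cmod phi)).
    - split; auto. apply Cmod_ge_0.
    - intros n. rewrite (HE n k), Cmod_mult, Cmod_pow. apply Rmult_le_compat_l.
      + apply pow_le, Cmod_ge_0.
      + apply HEb. }
  intros j. induction j; auto.
  specialize (HE0 j). unfold E in HE0. rewrite IHj in HE0.
  transitivity (Cminus (D (S j)) (Cmult r (RtoC 0))); [ring | exact HE0].
Qed.

Lemma Csum_bound (f : nat -> nat -> C) i : (forall k, exists Mk, forall j, Cmod (f k j) <= Mk) ->
  exists M, forall j, Cmod (Csum (fun k => f k j) 0 i) <= M.
Proof.
  intros H. induction i.
  - destruct (H 0%nat) as [M HM]. exists M. intros j. unfold Csum. simpl.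
    rewrite Cplus_0_r. apply HM.
  - destruct IHi as [M HM]. destruct (H (S i)) as [M' HM']. exists (M + M'). intros j.
    rewrite Csum_last by lia. eapply Rle_trans; [apply Cmod_triangle|]. apply Rplus_le_compat; auto.
Qed.

Lemma GG_bound c R1 R2 pi (r : C) i : Cmod r < 1 -> exists M, forall j, Cmod (GG c R1 R2 pi r i j) <= M.
Proof.
  intros Hr. unfold GG. apply (Csum_bound (fun k j => Cmult (Cmult (Cmult (vseq c R1 R2 pi i k) (Cpow (Cminus (RtoC 1) R2) k)) (RtoC (bb j k))) (Cpow r j))).
  intros k. destruct (bb_bound (Cmod r) k) as [Mk HMk]; [split; [apply Cmod_ge_0|auto]|].
  exists (Cmod (vseq c R1 R2 pi i k) * Cmod (Cpow (Cminus (RtoC 1) R2) k) * Mk). intros j.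
  rewrite !Cmod_mult, Cmod_R, !Cmod_pow, (Rabs_pos_eq (bb j k)) by apply bb_nonneg.
  rewrite Rmult_assoc. apply Rmult_le_compat_l.
  - apply Rmult_le_pos; [apply Cmod_ge_0| apply pow_le, Cmod_ge_0].
  - apply HMk.
Qed.

Lemma lin_comb (p0 p1 p2 g0 g1 g2 F mu w lam : C) :
  Cmult w p1 = Cplus (Cplus (Cmult mu p2) (Cmult lam p0)) F ->
  Cplus (Cminus (Cmult mu g2) (Cmult w g1)) (Cmult lam g0) = Copp F ->
  Cplus (Cminus (Cmult mu (Cminus p2 g2)) (Cmult w (Cminus p1 g1))) (Cmult lam (Cminus p0 g0)) = RtoC 0.
Proof.
  intros A B.
  transitivity (Cminus (Cminus (Cplus (Cplus (Cmult mu p2) (Cmult lam p0)) F) (Cmult w p1))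
                       (Cplus (Cplus (Cminus (Cmult mu g2) (Cmult w g1)) (Cmult lam g0)) F)); [ring|].
  rewrite <- A, B. ring.
Qed.

Lemma phi_rel (mu lam w r phi D0 D1 D2 : C) :
  Cmult mu r = Cmult lam phi ->
  Cplus (Cminus (Cmult lam (Cmult phi phi)) (Cmult w phi)) mu = RtoC 0 ->
  mu <> RtoC 0 ->
  Cplus (Cminus (Cmult mu D2) (Cmult w D1)) (Cmult lam D0) = RtoC 0 ->
  Cmult phi (Cminus D2 (Cmult r D1)) = Cminus D1 (Cmult r D0).
Proof.
  intros H1 Hq Hmu Hom.
  apply Ceq_from_minus.
  set (X := Cminus (Cmult phi (Cminus D2 (Cmult r D1))) (Cminus D1 (Cmult r D0))).
  assert (HX : Cmult mu X = RtoC 0).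
  { transitivity (Cplus (Cplus (Cmult phi (Cplus (Cminus (Cmult mu D2) (Cmult w D1)) (Cmult lam D0)))
                             (Cmult (Copp D1) (Cplus (Cminus (Cmult lam (Cmult phi phi)) (Cmult w phi)) mu)))
                       (Cmult (Cminus D0 (Cmult phi D1)) (Cminus (Cmult mu r) (Cmult lam phi)))).
    - unfold X. ring.
    - rewrite Hom, Hq, H1. ring. }
  transitivity (Cmult (Cinv mu) (Cmult mu X)); [field; auto| rewrite HX; ring].
Qed.

Theorem theorem2 (c : nat) (l1 l2 m1 m2 : R) (alpha : C) (pi : state -> C) :
  (1 <= c)%nat -> 0 < l1 -> 0 < l2 -> 0 < m1 -> 0 < m2 ->
  0 < fst alpha ->
  (forall x : state, is_laplace_pi c l1 l2 m1 m2 alpha x (pi x)) ->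
  forall i j : nat, (1 <= j)%nat ->
    pi (i, (c - 1 + j)%nat) =
    Csum (fun k => Cmult (Cmult (Cmult (vseq c (bigR1 c l1 l2 m2 alpha)
                                              (bigR2 c l1 l2 m2 alpha) pi i k)
                                        (Cpow (Cminus (RtoC 1) (bigR2 c l1 l2 m2 alpha)) k))
                                 (RtoC (Binomial.C (j - 1 + k) k)))
                         (Cpow (r2 c l1 l2 m2 alpha) j))
         0 i.
Proof.
  intros Hc H1 H2 H3 H4 Ha Hpi.
  set (R1 := bigR1 c l1 l2 m2 alpha).
  set (R2 := bigR2 c l1 l2 m2 alpha).
  set (r := r2 c l1 l2 m2 alpha).
  set (phi := phi2 c l1 l2 m2 alpha).
  set (mur := INR c * m2).
  assert (Hmu : 0 < mur) by (unfold mur; apply Rmult_lt_0_compat; [apply lt_0_INR; lia| lra]).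
  set (w := Cplus alpha (RtoC (l1 + l2 + mur))).
  destruct (phi_facts l2 mur (Cplus (RtoC l1) alpha) H2 Hmu ltac:(simpl; lra)) as [Hq [Hphi Hr]].
  fold phi in Hq, Hphi, Hr.
  change (phiB l2 mur (Cplus (RtoC l1) alpha)) with phi in Hq, Hphi, Hr.
  assert (Hw : Cplus (RtoC (l2 + mur)) (Cplus (RtoC l1) alpha) = w) by (apply C_ext; simpl; ring).
  rewrite Hw in Hq.
  assert (Hr' : Cmod r < 1) by exact Hr.
  assert (Hmu0 : RtoC mur <> RtoC 0) by (apply RtoC_nz; lra).
  assert (Hl20 : RtoC l2 <> RtoC 0) by (apply RtoC_nz; lra).
  assert (Hrdef : r = Cmult (Cdiv (RtoC l2) (RtoC mur)) phi).
  { unfold r, r2, rho2. fold mur. fold phi. rewrite RtoC_div by lra. reflexivity. }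
  assert (E1 : Cmult (RtoC mur) r = Cmult (RtoC l2) phi) by (rewrite Hrdef; field; auto).
  assert (E2 : R2 = Cmult r phi) by reflexivity.
  assert (HR2 : Cmod R2 < 1).
  { rewrite E2, Cmod_mult. pose proof (Cmod_ge_0 r). pose proof (Cmod_ge_0 phi).
    apply Rle_lt_trans with (Cmod r * 1); [apply Rmult_le_compat_l; lra| lra]. }
  assert (Ha0 : Cminus (RtoC 1) R2 <> RtoC 0).
  { intros E. assert (R2 = RtoC 1) by (apply Ceq_minus in E; auto).
    rewrite H in HR2. rewrite Cmod_1 in HR2. lra. }
  assert (E3 : Cmult (Cmult (Cmult (RtoC l2) R1) (Cminus (RtoC 1) R2)) (Cminus (RtoC 1) R2) = Cmult (RtoC l1) r).
  { unfold R1, bigR1, Omega2. fold phi. fold r.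
    assert (Er : Cmult (RtoC (rho2 c l2 m2)) (Cmult phi phi) = R2) by (rewrite E2; unfold r, r2; fold phi; ring).
    rewrite Er.
    replace (Cmult r phi) with R2 by (rewrite E2; reflexivity).
    change (Cmult (RtoC (rho2 c l2 m2)) phi) with r.
    field. auto. }
  assert (E4 : Cplus (Cminus (Cmult (Cmult (RtoC mur) r) r) (Cmult w r)) (RtoC l2) = RtoC 0).
  { rewrite Hrdef.
    transitivity (Cmult (Cdiv (RtoC l2) (RtoC mur)) (Cplus (Cminus (Cmult (RtoC l2) (Cmult phi phi)) (Cmult w phi)) (RtoC mur))).
    - field. auto.
    - rewrite Hq. ring. }
  assert (Key : forall i0, (match i0 with O => True | S i' => forall j, pi (i', (c - 1 + j)%nat) = GG c R1 R2 pi r i' j end) ->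
                forall j, pi (i0, (c - 1 + j)%nat) = GG c R1 R2 pi r i0 j).
  { intros i0 IH j0.
    set (D := fun j => Cminus (pi (i0, (c - 1 + j)%nat)) (GG c R1 R2 pi r i0 j)).
    destruct (GG_bound c R1 R2 pi r i0 Hr') as [MG HMG].
    assert (Hom : forall j, Cplus (Cminus (Cmult (RtoC mur) (D (S (S j)))) (Cmult w (D (S j)))) (Cmult (RtoC l2) (D j)) = RtoC 0).
    { intros j.
      pose proof (rec_J c l1 l2 m1 m2 alpha pi i0 (c - 1 + S j) H1 H2 H3 H4 Ha Hpi Hc ltac:(lia)) as RJ.
      replace (S (c - 1 + S j)) with (c - 1 + S (S j))%nat in RJ by lia.
      replace (pred (c - 1 + S j)) with (c - 1 + j)%nat in RJ by lia.
      change (INR c * m2) with mur in RJ. fold w in RJ.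
      pose proof (rec_G c pi (RtoC l2) (RtoC mur) w r phi R1 R2 (RtoC l1) i0 j E1 E2 E3 E4) as RG.
      unfold D. destruct i0 as [|i'].
      - apply (lin_comb _ _ _ _ _ _ (RtoC 0) _ _ _ RJ). rewrite RG. ring.
      - rewrite (IH (S j)) in RJ. apply (lin_comb _ _ _ _ _ _ _ _ _ _ RJ). exact RG. }
    assert (Hrec : forall j, Cmult phi (Cminus (D (S (S j))) (Cmult r (D (S j)))) = Cminus (D (S j)) (Cmult r (D j))).
    { intros j. apply (phi_rel (RtoC mur) (RtoC l2) w r phi); auto. }
    assert (HD0 : D 0%nat = RtoC 0).
    { unfold D. rewrite GG_0. rewrite Nat.add_0_r. destruct i0; unfold Cminus; rewrite Cplus_opp_r; reflexivity. }
    assert (HB : forall j, Cmod (D j) <= 2 / fst alpha + MG).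
    { intros j. unfold D. eapply Rle_trans; [apply Cmod_triangle|]. rewrite Cmod_opp.
      apply Rplus_le_compat; [apply (pi_Cmod c l1 l2 m1 m2 alpha pi); auto| apply HMG]. }
    pose proof (uniq_rec D phi r _ Hphi Hrec HD0 HB j0) as HZ.
    unfold D in HZ. apply Ceq_minus. exact HZ. }
  assert (Main : forall i j, pi (i, (c - 1 + j)%nat) = GG c R1 R2 pi r i j).
  { intros i0. induction i0 as [|i' IH].
    - apply Key. exact I.
    - apply Key. exact IH. }
  intros i j Hj.
  rewrite Main. unfold GG. apply Csum_ext. intros k _.
  destruct j as [|j']; [lia|]. rewrite <- bb_binom.
  replace (S j' - 1 + k)%nat with (j' + k)%nat by lia. reflexivity.
Qed.
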